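(* Let $H(X,Y,q)$ be the mirror curve polynomial described in the context, with Newton polygon $P$. There is $\epsilon>0$ such that for every $q\in(\mathbb{C}^* )^p$ with $|q_k|<\epsilon$ for all $k$, the (injective) map sending a connected component of $\mathbb{R}^2\setminus A_H$ to its order is surjective onto $P\cap\mathbb{Z}^2$; i.e. every lattice point of $P$ is the order of some connected component of $\mathbb{R}^2\setminus A_H$.
   Context: Let $P\subset\mathbb{R}^2$ be a convex lattice polygon with a unimodular triangulation $T_\Sigma$ (triangles with lattice vertices and area $1/2$; vertex set $P\cap\mathbb{Z}^2$), encoding a smooth toric Calabi–Yau 3-fold. Write $P\cap\mathbb{Z}^2=\{b_1,\dots,b_{p+3}\}$, $b_i=(m_i,n_i)$, with $b_1=(1,0)$, $b_2=(0,1)$, $b_3=(0,0)$ and $\sigma_1=\{b_1,b_2,b_3\}$ a triangle of $T_\Sigma$. Let $L=\ker(\mathbb{Z}^{p+3}\to\mathbb{Z}^3,\ e_i\mapsto(m_i,n_i,1))$, $D_i\in L^\vee$ the restriction of the $i$-th coordinate functional; for a triangle $\sigma$ with vertex index set $I'_\sigma$, $\{D_j:j\notin I'_\sigma\}$ is a basis of $L^\vee\otimes\mathbb{Q}$. Fix $H_1,\dots,H_p\in L^\vee\otimes\mathbb{Q}$ with $H_k=\sum_{j\notin I'_\sigma}s^\sigma_{k,j}D_j$, $s^\sigma_{k,j}\in\mathbb{Z}_{\ge0}$, $(s^\sigma_{k,j})$ nondegenerate, for every triangle $\sigma$. Set $a_i(q)=1$ ($i=1,2,3$), $a_i(q)=\prod_k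 q_k^{s^{\sigma_1}_{k,i}}$ ($i\ge4$), and $H(X,Y,q)=\sum_{i=1}^{p+3}a_i(q)X^{m_i}Y^{n_i}$. The amoeba of $H$ is $A_H=\mathrm{Log}(\{H=0\})\subset\mathbb{R}^2$, $\mathrm{Log}(x,y)=(\log|x|,\log|y|)$. For $w\in\mathbb{R}^2\setminus A_H$ its order is $v(w)\in\mathbb{Z}^2$, $v_j(w)=\frac{1}{(2\pi i)^2}\int_{\mathrm{Log}^{-1}(w)}\frac{z_j\partial_{z_j}H}{H}\frac{dz_1}{z_1}\wedge\frac{dz_2}{z_2}$ (with $z=(X,Y)$); it is constant on connected components of $\mathbb{R}^2\setminus A_H$, lies in $P$, and distinct components have distinct orders. *)

(* Defs.v *)
From Stdlib Require Import Reals QArith ZArith List Arith.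
From Coquelicot Require Import Coquelicot.
Import ListNotations.

Definition Rsum (n : nat) (f : nat -> R) : R := fold_right Rplus 0%R (map f (seq 0 n)).
Definition Qsum (n : nat) (f : nat -> Q) : Q := fold_right Qplus 0%Q (map f (seq 0 n)).
Definition Csum (n : nat) (f : nat -> C) : C := fold_right Cplus (RtoC 0) (map f (seq 0 n)).
Definition Cprod (n : nat) (f : nat -> C) : C := fold_right Cmult (RtoC 1) (map f (seq 0 n)).

Definition toR2 (z : Z * Z) : R * R := (IZR (fst z), IZR (snd z)).

Definition conv (pts : list (R * R)) (x : R * R) : Prop :=
  exists lam : list R,
    length lam = length pts /\
    List.Forall (fun l : R => (0 <= l)%R) lam /\
    fold_right Rplus 0%R lam = 1%R /\
    fold_right Rplus 0%R (map (fun lp => fst lp * fst (snd lp))%R (combine lam pts)) = fst x /\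
    fold_right Rplus 0%R (map (fun lp => fst lp * snd (snd lp))%R (combine lam pts)) = snd x.

(* The polygon P = conv{b_0,...,b_(N-1)} (0-based indexing of b_1..b_(p+3)). *)
Definition polyP (N : nat) (b : nat -> Z * Z) (x : R * R) : Prop :=
  conv (map (fun i => toR2 (b i)) (seq 0 N)) x.

Definition tri := (nat * nat * nat)%type.
Definition tri_idx (s : tri) : list nat := let '(i, j, k) := s in [i; j; k].
Definition in_trib (s : tri) (j : nat) : bool := existsb (Nat.eqb j) (tri_idx s).
Definition pts_of (b : nat -> Z * Z) (I : list nat) : list (R * R) :=
  map (fun i => toR2 (b i)) I.

Definition twice_area (b : nat -> Z * Z) (s : tri) : Z :=
  let '(i, j, k) := s in
  Z.abs ((fst (b j) - fst (b i)) * (snd (b k) - snd (b i))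
       - (snd (b j) - snd (b i)) * (fst (b k) - fst (b i)))%Z.

Definition lattice_points_of_P (N : nat) (b : nat -> Z * Z) : Prop :=
  (forall i j, (i < N)%nat -> (j < N)%nat -> b i = b j -> i = j) /\
  (forall z : Z * Z, polyP N b (toR2 z) -> exists i, (i < N)%nat /\ b i = z).

Definition unimodular_triangulation (N : nat) (b : nat -> Z * Z) (T : list tri) : Prop :=
  (forall s, In s T -> forall i, In i (tri_idx s) -> (i < N)%nat) /\
  (forall s, In s T -> twice_area b s = 1%Z) /\
  (forall x, polyP N b x -> exists s, In s T /\ conv (pts_of b (tri_idx s)) x) /\
  (forall s x, In s T -> conv (pts_of b (tri_idx s)) x -> polyP N b x) /\
  (* two triangles meet in a common face (conv of their common vertices) *)
  (forall s t x, In s T -> In t T ->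
     (conv (pts_of b (tri_idx s)) x /\ conv (pts_of b (tri_idx t)) x <->
      conv (pts_of b (filter (in_trib t) (tri_idx s))) x)) /\
  (forall i, (i < N)%nat -> exists s, In s T /\ In i (tri_idx s)).

(* l ∈ L ⊗ Q = ker (Q^N -> Q^3, e_i |-> (m_i, n_i, 1)) *)
Definition inLQ (N : nat) (b : nat -> Z * Z) (l : nat -> Q) : Prop :=
  Qsum N (fun i => l i * inject_Z (fst (b i)))%Q == 0%Q /\
  Qsum N (fun i => l i * inject_Z (snd (b i)))%Q == 0%Q /\
  Qsum N l == 0%Q.

(* Elements of L^∨ ⊗ Q = Hom(L ⊗ Q, Q) are represented by vectors h ∈ Q^N
   (acting by the dot product); D_j is represented by e_j.
   "H_k = sum_{j ∉ σ} s^σ_{k,j} D_j in L^∨ ⊗ Q" : *)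
Definition H_expansion (N p : nat) (b : nat -> Z * Z) (h : nat -> nat -> Q)
    (s : tri -> nat -> nat -> nat) (sg : tri) : Prop :=
  forall k, (k < p)%nat -> forall l, inLQ N b l ->
    Qsum N (fun i => h k i * l i)%Q
    == Qsum N (fun j => if in_trib sg j then 0%Q
                        else (inject_Z (Z.of_nat (s sg k j)) * l j)%Q).

(* the p x p matrix (s^σ_{k,j})_{k, j ∉ σ} is nondegenerate (trivial left kernel) *)
Definition nondegenerate (N p : nat) (s : tri -> nat -> nat -> nat) (sg : tri) : Prop :=
  forall c : nat -> Q,
    (forall j, (j < N)%nat -> in_trib sg j = false ->
       Qsum p (fun k => c k * inject_Z (Z.of_nat (s sg k j)))%Q == 0%Q) ->
    forall k, (k < p)%nat -> c k == 0%Q.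

Definition sigma1 : tri := (0%nat, 1%nat, 2%nat).

Definition mirror_setup (p : nat) (b : nat -> Z * Z) (T : list tri)
    (h : nat -> nat -> Q) (s : tri -> nat -> nat -> nat) : Prop :=
  b 0%nat = (1%Z, 0%Z) /\ b 1%nat = (0%Z, 1%Z) /\ b 2%nat = (0%Z, 0%Z) /\
  lattice_points_of_P (p + 3) b /\
  unimodular_triangulation (p + 3) b T /\
  In sigma1 T /\
  (forall sg, In sg T -> H_expansion (p + 3) p b h s sg /\ nondegenerate (p + 3) p s sg).

Definition Cpowz (z : C) (m : Z) : C :=
  match m with
  | Z0 => RtoC 1
  | Zpos n => Cpow z (Pos.to_nat n)
  | Zneg n => Cinv (Cpow z (Pos.to_nat n))
  end.

(* a_i(q) (0-based: a_0 = a_1 = a_2 = 1) *)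
Definition coef_a (p : nat) (s : tri -> nat -> nat -> nat) (q : nat -> C) (i : nat) : C :=
  if (i <? 3)%nat then RtoC 1 else Cprod p (fun k => Cpow (q k) (s sigma1 k i)).

Definition monom (b : nat -> Z * Z) (i : nat) (X Y : C) : C :=
  Cmult (Cpowz X (fst (b i))) (Cpowz Y (snd (b i))).

Definition Hpoly (N : nat) (b : nat -> Z * Z) (a : nat -> C) (X Y : C) : C :=
  Csum N (fun i => Cmult (a i) (monom b i X Y)).

Definition XdH (N : nat) (b : nat -> Z * Z) (a : nat -> C) (X Y : C) : C :=
  Csum N (fun i => Cmult (Cmult (a i) (RtoC (IZR (fst (b i))))) (monom b i X Y)).
Definition YdH (N : nat) (b : nat -> Z * Z) (a : nat -> C) (X Y : C) : C :=
  Csum N (fun i => Cmult (Cmult (a i) (RtoC (IZR (snd (b i))))) (monom b i X Y)).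

Definition amoeba (N : nat) (b : nat -> Z * Z) (a : nat -> C) (w : R * R) : Prop :=
  exists X Y : C, X <> RtoC 0 /\ Y <> RtoC 0 /\ Hpoly N b a X Y = RtoC 0 /\
    ln (Cmod X) = fst w /\ ln (Cmod Y) = snd w.

Definition circ (r t : R) : C := (exp r * cos t, exp r * sin t)%R.

(* v_j(w) = 1/(2πi)^2 ∫_{Log^{-1}(w)} (z_j ∂_{z_j} H / H) dz1/z1 ∧ dz2/z2,
   with Log^{-1}(w) parametrized by (θ1,θ2) ∈ [0,2π]^2, z_k = e^{w_k + i θ_k},
   so dz1/z1 ∧ dz2/z2 = (i dθ1) ∧ (i dθ2) (standard orientation). *)
Definition order_coord (N : nat) (b : nat -> Z * Z) (a : nat -> C)
    (G : C -> C -> C) (w : R * R) : C :=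
  Cmult (Cinv (Cpow (Cmult (RtoC (2 * PI)) Ci) 2))
   (RInt (V := C_R_CompleteNormedModule)
      (fun t1 => RInt (V := C_R_CompleteNormedModule)
         (fun t2 => let X := circ (fst w) t1 in let Y := circ (snd w) t2 in
                    Cmult (Cdiv (G X Y) (Hpoly N b a X Y)) (Cmult Ci Ci))
         0 (2 * PI))
      0 (2 * PI)).

Definition amoeba_order (N : nat) (b : nat -> Z * Z) (a : nat -> C) (w : R * R) : C * C :=
  (order_coord N b a (XdH N b a) w, order_coord N b a (YdH N b a) w).

(* Main.v *)
Require Import Defs.
From Stdlib Require Import Reals QArith ZArith List Arith.
From Coquelicot Require Import Coquelicot.
From Stdlib Require Import Lra Lia Qreals Classical.
Import ListNotations.
Open Scope R_scope.

Lemma fold_Rplus_acc (l : list R) (a : R) :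
  fold_right Rplus a l = a + fold_right Rplus 0 l.
Proof. induction l; simpl; [lra|rewrite IHl; lra]. Qed.

Lemma Rsum_S n f : Rsum (S n) f = Rsum n f + f n.
Proof.
  unfold Rsum. rewrite seq_S, map_app, fold_right_app. simpl.
  rewrite fold_Rplus_acc. lra.
Qed.

Lemma Rsum_0 f : Rsum 0 f = 0.
Proof. reflexivity. Qed.

Lemma Rsum_ext n f g : (forall j, (j < n)%nat -> f j = g j) -> Rsum n f = Rsum n g.
Proof.
  induction n; intros H; [reflexivity|]. rewrite !Rsum_S, IHn, H; auto.
Qed.

Lemma Rsum_plus n f g : Rsum n (fun j => f j + g j) = Rsum n f + Rsum n g.
Proof. induction n; [unfold Rsum; simpl; ring|]. rewrite !Rsum_S, IHn; ring. Qed.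

Lemma Rsum_scal n c f : Rsum n (fun j => c * f j) = c * Rsum n f.
Proof. induction n; [unfold Rsum; simpl; ring|]. rewrite !Rsum_S, IHn; ring. Qed.

Lemma Rsum_opp n f : Rsum n (fun j => - f j) = - Rsum n f.
Proof. induction n; [unfold Rsum; simpl; ring|]. rewrite !Rsum_S, IHn; ring. Qed.

Lemma Rsum_le n f g : (forall j, (j < n)%nat -> f j <= g j) -> Rsum n f <= Rsum n g.
Proof.
  induction n; intros H; [unfold Rsum; simpl; lra|]. rewrite !Rsum_S.
  assert (f n <= g n) by (apply H; lia). assert (Rsum n f <= Rsum n g) by (apply IHn; intros; apply H; lia). lra.
Qed.

Lemma Rsum_nonneg n f : (forall j, (j < n)%nat -> 0 <= f j) -> 0 <= Rsum n f.
Proof. intros H. replace 0 with (Rsum n (fun _ => 0)). apply Rsum_le; auto.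
  clear H; induction n; [reflexivity| rewrite Rsum_S, IHn; lra]. Qed.

Lemma Rsum_const n c : Rsum n (fun _ => c) = INR n * c.
Proof. induction n; [unfold Rsum; simpl; lra|]. rewrite Rsum_S, IHn, S_INR; lra. Qed.

Lemma Rsum_delta n i c : (i < n)%nat -> Rsum n (fun j => if Nat.eqb j i then c else 0) = c.
Proof.
  induction n; intros H; [lia|]. rewrite Rsum_S.
  destruct (Nat.eqb_spec n i).
  - subst. rewrite (Rsum_ext _ _ (fun _ => 0)). rewrite Rsum_const; lra.
    intros j Hj. destruct (Nat.eqb_spec j i); [lia|auto].
  - rewrite IHn; [lra|lia].
Qed.

Lemma Rsum_single_le n f i : (forall j, (j < n)%nat -> 0 <= f j) -> (i < n)%nat -> f i <= Rsum n f.
Proof.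
  intros H Hi. rewrite <- (Rsum_delta n i (f i)) by auto. apply Rsum_le.
  intros j Hj. destruct (Nat.eqb_spec j i); [subst; lra| apply H; auto].
Qed.

Lemma Q2R_Qsum n f : Q2R (Qsum n f) = Rsum n (fun j => Q2R (f j)).
Proof.
  induction n; [unfold Qsum, Rsum, Q2R; simpl; field|].
  unfold Qsum, Rsum in *. rewrite seq_S, !map_app, !fold_right_app. simpl.
  rewrite fold_Rplus_acc.
  assert (Hq : forall l a, Qeq (fold_right Qplus a l) (Qplus a (fold_right Qplus 0%Q l))).
  { induction l; intros; simpl. ring. rewrite IHl. ring. }
  rewrite (Qeq_eqR _ _ (Hq _ _)), Q2R_plus, IHn, Q2R_plus. unfold Q2R at 2; simpl. lra.
Qed.

Lemma fold_Cplus_acc (l : list C) (a : C) :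
  fold_right Cplus a l = Cplus a (fold_right Cplus (RtoC 0) l).
Proof. induction l; simpl. rewrite Cplus_0_r; auto. rewrite IHl. ring. Qed.

Lemma Csum_S n f : Csum (S n) f = Cplus (Csum n f) (f n).
Proof.
  unfold Csum. rewrite seq_S, map_app, fold_right_app. simpl.
  rewrite fold_Cplus_acc. rewrite Cplus_0_r. ring.
Qed.

Lemma Csum_ext n f g : (forall j, (j < n)%nat -> f j = g j) -> Csum n f = Csum n g.
Proof.
  induction n; intros H; [reflexivity|]. rewrite !Csum_S, IHn, H; auto.
Qed.

Lemma Csum_plus n f g : Csum n (fun j => Cplus (f j) (g j)) = Cplus (Csum n f) (Csum n g).
Proof. induction n; [unfold Csum; simpl; ring|]. rewrite !Csum_S, IHn; ring. Qed.

Lemma Csum_scal n c f : Csum n (fun j => Cmult c (f j)) = Cmult c (Csum n f).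
Proof. induction n; [unfold Csum; simpl; ring|]. rewrite !Csum_S, IHn; ring. Qed.

Lemma Csum_delta n i c : (i < n)%nat -> Csum n (fun j => if Nat.eqb j i then c else RtoC 0) = c.
Proof.
  induction n; intros H; [lia|]. rewrite Csum_S.
  destruct (Nat.eqb_spec n i).
  - subst. rewrite (Csum_ext _ _ (fun _ => RtoC 0)).
    assert (Z0 : forall m, Csum m (fun _ => RtoC 0) = RtoC 0).
    { induction m; [reflexivity| rewrite Csum_S, IHm; ring]. }
    rewrite Z0; ring.
    intros j Hj. destruct (Nat.eqb_spec j i); [lia|auto].
  - rewrite IHn; [ring|lia].
Qed.

Lemma Csum_fst n f : fst (Csum n f) = Rsum n (fun j => fst (f j)).
Proof. induction n; [reflexivity|]. rewrite Csum_S, Rsum_S, <- IHn. reflexivity. Qed.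
Lemma Csum_snd n f : snd (Csum n f) = Rsum n (fun j => snd (f j)).
Proof. induction n; [reflexivity|]. rewrite Csum_S, Rsum_S, <- IHn. reflexivity. Qed.

Lemma Cmod_Csum n f : Cmod (Csum n f) <= Rsum n (fun j => Cmod (f j)).
Proof.
  induction n. unfold Csum, Rsum; simpl. rewrite Cmod_0. lra.
  rewrite Csum_S, Rsum_S. eapply Rle_trans. apply Cmod_triangle. lra.
Qed.

Lemma Ceq (a b : C) : fst a = fst b -> snd a = snd b -> a = b.
Proof. destruct a, b; simpl; intros; subst; auto. Qed.

Lemma circ_mult r t r' t' : Cmult (circ r t) (circ r' t') = circ (r + r') (t + t').
Proof.
  unfold circ; apply Ceq; simpl; rewrite ?exp_plus, ?cos_plus, ?sin_plus; ring.
Qed.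

Lemma circ_inv r t : Cinv (circ r t) = circ (- r) (- t).
Proof.
  assert (E : circ r t <> RtoC 0).
  { intro H. assert (H1 := f_equal fst H). assert (H2 := f_equal snd H). simpl in *.
    assert (exp r > 0) by apply exp_pos.
    assert (cos t = 0) by (apply (Rmult_eq_reg_l (exp r)); lra).
    assert (sin t = 0) by (apply (Rmult_eq_reg_l (exp r)); lra).
    pose proof (sin2_cos2 t). unfold Rsqr in *. nra. }
  assert (Hm : Cmult (circ r t) (circ (-r) (-t)) = RtoC 1).
  { rewrite circ_mult. unfold circ. replace (r + - r) with 0 by ring. replace (t + - t) with 0 by ring.
    rewrite exp_0, cos_0, sin_0. apply Ceq; simpl; ring. }
  rewrite <- (Cmult_1_r (Cinv (circ r t))). rewrite <- Hm. field. auto.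
Qed.

Lemma Cpow_circ r t n : Cpow (circ r t) n = circ (INR n * r) (INR n * t).
Proof.
  induction n; simpl Cpow.
  - unfold circ; simpl. rewrite !Rmult_0_l, exp_0, cos_0, sin_0. apply Ceq; simpl; ring.
  - rewrite IHn, circ_mult, S_INR. f_equal; ring.
Qed.

Lemma Cpowz_circ r t m : Cpowz (circ r t) m = circ (IZR m * r) (IZR m * t).
Proof.
  destruct m; simpl Cpowz.
  - unfold circ; rewrite !Rmult_0_l, exp_0, cos_0, sin_0. apply Ceq; simpl; ring.
  - rewrite Cpow_circ, INR_IPR. reflexivity.
  - rewrite Cpow_circ, circ_inv, INR_IPR. f_equal; unfold IZR; ring.
Qed.

Lemma monom_circ b j r1 t1 r2 t2 :
  monom b j (circ r1 t1) (circ r2 t2) =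
  circ (IZR (fst (b j)) * r1 + IZR (snd (b j)) * r2) (IZR (fst (b j)) * t1 + IZR (snd (b j)) * t2).
Proof. unfold monom. rewrite !Cpowz_circ, circ_mult. reflexivity. Qed.

Lemma circ_split r t : circ r t = Cmult (RtoC (exp r)) (circ 0 t).
Proof. unfold circ; rewrite exp_0; apply Ceq; simpl; ring. Qed.

Lemma Cmod_circ r t : Cmod (circ r t) = exp r.
Proof.
  unfold circ, Cmod; simpl fst; simpl snd.
  replace ((exp r * cos t) ^ 2 + (exp r * sin t) ^ 2) with (exp r ^ 2); [|pose proof (sin2_cos2 t) as HH; unfold Rsqr in HH; nra].
  rewrite sqrt_pow2; auto. left; apply exp_pos.
Qed.

Lemma Cmod_Cpow z n : Cmod (Cpow z n) = Cmod z ^ n.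
Proof. induction n; simpl. apply Cmod_1. rewrite Cmod_mult, IHn; auto. Qed.

Lemma Cmod_Cpowz X m : X <> RtoC 0 -> Cmod (Cpowz X m) = exp (IZR m * ln (Cmod X)).
Proof.
  intros HX. assert (Hp : 0 < Cmod X) by (apply Cmod_gt_0; auto).
  assert (Hpow : forall n, Cmod X ^ n = exp (INR n * ln (Cmod X))).
  { intros n. rewrite <- ln_pow by auto. rewrite exp_ln; auto. apply pow_lt; auto. }
  destruct m; simpl Cpowz.
  - rewrite Cmod_1, Rmult_0_l, exp_0; auto.
  - rewrite Cmod_Cpow, Hpow, INR_IPR; auto.
  - rewrite Cmod_inv, Cmod_Cpow, Hpow, INR_IPR.
    rewrite <- exp_Ropp. f_equal. unfold IZR. ring.
    intro H. assert (Cmod (Cpow X (Pos.to_nat p)) = 0) by (rewrite H; apply Cmod_0).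
    rewrite Cmod_Cpow in H0. apply pow_nonzero in H0; auto. lra.
Qed.

Lemma Cmod_monom b j X Y : X <> RtoC 0 -> Y <> RtoC 0 ->
  Cmod (monom b j X Y) = exp (IZR (fst (b j)) * ln (Cmod X) + IZR (snd (b j)) * ln (Cmod Y)).
Proof. intros. unfold monom. rewrite Cmod_mult, !Cmod_Cpowz, exp_plus; auto. Qed.

Lemma PI2_pos : 0 < 2 * PI.
Proof. pose proof PI_RGT_0; lra. Qed.

Lemma cont2d_y (g : R -> R -> R) x y : continuity_2d_pt g x y -> continuous (fun z => g x z) y.
Proof.
  intros H. apply continuity_pt_filterlim, continuity_pt_locally. intros eps.
  destruct (H eps) as [d Hd]. exists d. intros v Hv. apply Hd.
  rewrite Rminus_eq_0, Rabs_R0; apply cond_pos. apply Hv.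
Qed.

Lemma ex_RInt_cont2d (g : R -> R -> R) x : (forall x y, continuity_2d_pt g x y) ->
  ex_RInt (fun y => g x y) 0 (2 * PI).
Proof. intros H. apply (ex_RInt_continuous (V:=R_CompleteNormedModule)). intros z _. apply cont2d_y, H. Qed.

Lemma RInt_param_cont (g : R -> R -> R) : (forall x y, continuity_2d_pt g x y) ->
  forall x, continuous (fun x => RInt (fun y => g x y) 0 (2 * PI)) x.
Proof.
  intros H x. apply continuity_pt_filterlim, continuity_pt_locally. intros eps.
  pose proof PI2_pos as HP.
  assert (He : 0 < eps / (2 * PI + 1)) by (apply Rdiv_lt_0_compat; [apply cond_pos| lra]).
  destruct (uniform_continuity_2d g (x - 1) (x + 1) 0 (2 * PI)
     (fun u v _ _ => H u v) (mkposreal _ He)) as [d Hd].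
  assert (Hm : 0 < Rmin d 1) by (apply Rmin_pos; [apply cond_pos| lra]).
  exists (mkposreal _ Hm). intros u Hu. simpl in Hu. unfold ball in Hu; simpl in Hu; unfold AbsRing_ball, abs, minus, plus, opp in Hu; simpl in Hu.
  assert (Hu1 : Rabs (u - x) < d) by (eapply Rlt_le_trans; [apply Hu| apply Rmin_l]).
  assert (Hu2 : Rabs (u - x) < 1) by (eapply Rlt_le_trans; [apply Hu| apply Rmin_r]).
  change (Rabs (minus (RInt (fun y => g u y) 0 (2 * PI)) (RInt (fun y => g x y) 0 (2 * PI))) < eps).
  rewrite <- RInt_minus by (apply ex_RInt_cont2d; auto).
  eapply Rle_lt_trans. apply abs_RInt_le_const with (M := eps / (2 * PI + 1)). lra.
  apply ex_RInt_minus; apply ex_RInt_cont2d; auto.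
  intros t Ht. left. apply (Hd x t u t).
  - lra.
  - lra.
  - apply Rabs_lt_between' in Hu2. lra.
  - lra.
  - auto.
  - rewrite Rminus_eq_0, Rabs_R0; apply cond_pos.
  - simpl. rewrite Rminus_0_r. apply Rmult_lt_reg_r with (2 * PI + 1). lra.
    replace (2 * PI * (eps / (2 * PI + 1)) * (2 * PI + 1)) with (2 * PI * eps) by (field; lra). pose proof (cond_pos eps). nra.
Qed.

Lemma gen_y (f fy : R -> R -> R) :
  (forall x y, is_derive (fun z => f x z) y (fy x y)) ->
  (forall x y, continuity_2d_pt fy x y) ->
  (forall x, f x 0 = f x (2 * PI)) ->
  forall x, is_RInt (fun y => fy x y) 0 (2 * PI) 0.
Proof.
  intros Hy Cy Py x.
  assert (H := is_RInt_derive (fun z => f x z) (fun y => fy x y) 0 (2 * PI)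
     (fun y _ => Hy x y) (fun y _ => cont2d_y _ _ _ (Cy x y))).
  cbv beta in H. rewrite <- (Py x), minus_eq_zero in H. apply H.
Qed.

Lemma gen_x (f fx fy : R -> R -> R) :
  (forall x y, is_derive (fun z => f z y) x (fx x y)) ->
  (forall x y, is_derive (fun z => f x z) y (fy x y)) ->
  (forall x y, continuity_2d_pt fx x y) ->
  (forall y, f 0 y = f (2 * PI) y) ->
  is_RInt (fun x => RInt (fun y => fx x y) 0 (2 * PI)) 0 (2 * PI) 0.
Proof.
  intros Hx Hy Cx Px.
  set (Phi := fun x => RInt (fun y => f x y) 0 (2 * PI)).
  assert (HD : forall x, is_derive Phi x (RInt (fun y => fx x y) 0 (2 * PI))).
  { intros x. unfold Phi.
    assert (E : RInt (fun y => fx x y) 0 (2 * PI) = RInt (fun t => Derive (fun u => f u t) x) 0 (2 * PI)).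
    { apply RInt_ext. intros t _. symmetry. apply is_derive_unique, Hx. }
    rewrite E. apply (is_derive_RInt_param (fun u t => f u t)).
    - apply filter_forall. intros x0 t _. eexists; apply Hx.
    - intros t _. apply continuity_2d_pt_ext with fx; auto.
      intros. symmetry. apply is_derive_unique, Hx.
    - apply filter_forall. intros y. apply (ex_RInt_continuous (V:=R_CompleteNormedModule)). intros z _.
      apply (ex_derive_continuous (K:=R_AbsRing) (V:=R_NormedModule) (fun t => f y t)). eexists; apply Hy. }
  assert (H := is_RInt_derive Phi _ 0 (2 * PI) (fun x _ => HD x)
     (fun x _ => RInt_param_cont _ Cx x)).
  replace (Phi (2 * PI)) with (Phi 0) in H. rewrite minus_eq_zero in H. apply H.
  unfold Phi. apply RInt_ext. intros; apply Px.
Qed.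

Lemma is_derive_eq (f : R -> R) (x l l' : R) : is_derive f x l -> l = l' -> is_derive f x l'.
Proof. intros; subst; auto. Qed.

Lemma d_logmod (P Q : R -> R) x P' Q' : is_derive P x P' -> is_derive Q x Q' -> 0 < P x ->
  is_derive (fun z => ln (P z * P z + Q z * Q z) / 2) x ((P x * P' + Q x * Q') / (P x * P x + Q x * Q x)).
Proof.
  intros HP HQ Hp. eapply is_derive_eq. auto_derive.
  repeat split; try (eexists; eauto). nra.
  reflexivity.
  replace (Derive (fun x0 : R => P x0) x) with P' by (symmetry; apply is_derive_unique; auto).
  replace (Derive (fun x0 : R => Q x0) x) with Q' by (symmetry; apply is_derive_unique; auto). field. nra.
Qed.

Lemma d_arg (P Q : R -> R) x P' Q' : is_derive P x P' -> is_derive Q x Q' -> 0 < P x ->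
  is_derive (fun z => atan (Q z / P z)) x ((P x * Q' + Q x * (- P')) / (P x * P x + Q x * Q x)).
Proof.
  intros HP HQ Hp. eapply is_derive_eq. auto_derive.
  repeat split; try (eexists; eauto). lra.
  reflexivity.
  replace (Derive (fun x0 : R => P x0) x) with P' by (symmetry; apply is_derive_unique; auto).
  replace (Derive (fun x0 : R => Q x0) x) with Q' by (symmetry; apply is_derive_unique; auto).
  unfold Rsqr. field. split. nra. lra.
Qed.

Lemma cont_frac (P Q A B : R -> R -> R) x y :
  continuity_2d_pt P x y -> continuity_2d_pt Q x y -> continuity_2d_pt A x y -> continuity_2d_pt B x y ->
  0 < P x y ->
  continuity_2d_pt (fun u v => (P u v * A u v + Q u v * B u v) / (P u v * P u v + Q u v * Q u v)) x y.
Proof.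
  intros. unfold Rdiv. apply continuity_2d_pt_mult.
  apply continuity_2d_pt_plus; apply continuity_2d_pt_mult; auto.
  apply continuity_2d_pt_inv. apply continuity_2d_pt_plus; apply continuity_2d_pt_mult; auto. nra.
Qed.

Definition frac (P Q A B : R -> R -> R) := fun u v => (P u v * A u v + Q u v * B u v) / (P u v * P u v + Q u v * Q u v).

Lemma log_lemma (U V Ux Uy Vx Vy : R -> R -> R) :
  (forall x y, is_derive (fun z => U z y) x (Ux x y)) ->
  (forall x y, is_derive (fun z => U x z) y (Uy x y)) ->
  (forall x y, is_derive (fun z => V z y) x (Vx x y)) ->
  (forall x y, is_derive (fun z => V x z) y (Vy x y)) ->
  (forall x y, continuity_2d_pt U x y) -> (forall x y, continuity_2d_pt V x y) ->
  (forall x y, continuity_2d_pt Ux x y) -> (forall x y, continuity_2d_pt Uy x y) ->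
  (forall x y, continuity_2d_pt Vx x y) -> (forall x y, continuity_2d_pt Vy x y) ->
  (forall x y, 0 < 1 + U x y) ->
  (forall y, U 0 y = U (2 * PI) y) -> (forall y, V 0 y = V (2 * PI) y) ->
  (forall x, U x 0 = U x (2 * PI)) -> (forall x, V x 0 = V x (2 * PI)) ->
  let P := fun u v => 1 + U u v in
  let Ox := fun u v => - Ux u v in
  let Oy := fun u v => - Uy u v in
  (forall x y, continuity_2d_pt (frac P V Ux Vx) x y) /\
  (forall x y, continuity_2d_pt (frac P V Vx Ox) x y) /\
  (forall x y, continuity_2d_pt (frac P V Uy Vy) x y) /\
  (forall x y, continuity_2d_pt (frac P V Vy Oy) x y) /\
  is_RInt (fun x => RInt (fun y => frac P V Ux Vx x y) 0 (2 * PI)) 0 (2 * PI) 0 /\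
  is_RInt (fun x => RInt (fun y => frac P V Vx Ox x y) 0 (2 * PI)) 0 (2 * PI) 0 /\
  (forall x, is_RInt (fun y => frac P V Uy Vy x y) 0 (2 * PI) 0) /\
  (forall x, is_RInt (fun y => frac P V Vy Oy x y) 0 (2 * PI) 0).
Proof.
  intros dUx dUy dVx dVy cU cV cUx cUy cVx cVy pos pU pV qU qV P Ox Oy.
  assert (cP : forall x y, continuity_2d_pt P x y).
  { intros; apply continuity_2d_pt_plus; auto. apply continuity_2d_pt_const. }
  assert (dPx : forall x y, is_derive (fun z => P z y) x (Ux x y)).
  { intros. unfold P. eapply is_derive_eq. apply (is_derive_plus (fun _ => 1) (fun z => U z y)).
    apply is_derive_const. apply dUx. simpl. unfold plus, zero; simpl. ring. }
  assert (dPy : forall x y, is_derive (fun z => P x z) y (Uy x y)).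
  { intros. unfold P. eapply is_derive_eq. apply (is_derive_plus (fun _ => 1) (fun z => U x z)).
    apply is_derive_const. apply dUy. simpl. unfold plus, zero; simpl. ring. }
  set (Fre := fun u v => ln (P u v * P u v + V u v * V u v) / 2).
  set (Fim := fun u v => atan (V u v / P u v)).
  assert (c1 : forall x y, continuity_2d_pt (frac P V Ux Vx) x y) by (intros; apply cont_frac; auto; apply pos).
  assert (c2 : forall x y, continuity_2d_pt (frac P V Vx Ox) x y) by (intros; apply cont_frac; auto; try apply pos; apply continuity_2d_pt_opp; auto).
  assert (c3 : forall x y, continuity_2d_pt (frac P V Uy Vy) x y) by (intros; apply cont_frac; auto; apply pos).
  assert (c4 : forall x y, continuity_2d_pt (frac P V Vy Oy) x y) by (intros; apply cont_frac; auto; try apply pos; apply continuity_2d_pt_opp; auto).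
  assert (d1 : forall x y, is_derive (fun z => Fre z y) x (frac P V Ux Vx x y)).
  { intros. apply (d_logmod (fun z => P z y) (fun z => V z y)); auto; apply pos. }
  assert (d2 : forall x y, is_derive (fun z => Fim z y) x (frac P V Vx Ox x y)).
  { intros. apply (d_arg (fun z => P z y) (fun z => V z y)); auto; apply pos. }
  assert (d3 : forall x y, is_derive (fun z => Fre x z) y (frac P V Uy Vy x y)).
  { intros. apply (d_logmod (fun z => P x z) (fun z => V x z)); auto; apply pos. }
  assert (d4 : forall x y, is_derive (fun z => Fim x z) y (frac P V Vy Oy x y)).
  { intros. apply (d_arg (fun z => P x z) (fun z => V x z)); auto; apply pos. }
  repeat split; auto.
  - apply (gen_x Fre _ _ d1 d3 c1). intros; unfold Fre, P; rewrite pU, pV; auto.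
  - apply (gen_x Fim _ _ d2 d4 c2). intros; unfold Fim, P; rewrite pU, pV; auto.
  - apply (gen_y Fre _ d3 c3). intros; unfold Fre, P; rewrite qU, qV; auto.
  - apply (gen_y Fim _ d4 c4). intros; unfold Fim, P; rewrite qU, qV; auto.
Qed.

Lemma cos_intper (k : Z) t : cos (IZR k * (2 * PI) + t) = cos t.
Proof.
  destruct k.
  - rewrite Rmult_0_l, Rplus_0_l; auto.
  - replace (IZR (Zpos p)) with (INR (Pos.to_nat p)) by (rewrite INR_IPR; reflexivity).
    rewrite Rplus_comm. replace (INR (Pos.to_nat p) * (2 * PI)) with (2 * INR (Pos.to_nat p) * PI) by ring.
    apply cos_period.
  - replace (IZR (Zneg p)) with (- INR (Pos.to_nat p)) by (rewrite INR_IPR; reflexivity).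
    rewrite <- (cos_period (- INR (Pos.to_nat p) * (2 * PI) + t) (Pos.to_nat p)). f_equal. ring.
Qed.

Lemma sin_intper (k : Z) t : sin (IZR k * (2 * PI) + t) = sin t.
Proof.
  destruct k.
  - rewrite Rmult_0_l, Rplus_0_l; auto.
  - replace (IZR (Zpos p)) with (INR (Pos.to_nat p)) by (rewrite INR_IPR; reflexivity).
    rewrite Rplus_comm. replace (INR (Pos.to_nat p) * (2 * PI)) with (2 * INR (Pos.to_nat p) * PI) by ring.
    apply sin_period.
  - replace (IZR (Zneg p)) with (- INR (Pos.to_nat p)) by (rewrite INR_IPR; reflexivity).
    rewrite <- (sin_period (- INR (Pos.to_nat p) * (2 * PI) + t) (Pos.to_nat p)). f_equal. ring.
Qed.

Lemma is_derive_Rsum N (f f' : nat -> R -> R) x :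
  (forall j, is_derive (f j) x (f' j x)) ->
  is_derive (fun z => Rsum N (fun j => f j z)) x (Rsum N (fun j => f' j x)).
Proof.
  intros H. induction N.
  - unfold Rsum; simpl. apply (is_derive_const (K:=R_AbsRing) (V:=R_NormedModule) 0).
  - eapply is_derive_ext. intros t. rewrite <- Rsum_S. reflexivity.
    rewrite Rsum_S. apply (is_derive_plus (K:=R_AbsRing) (V:=R_NormedModule)); auto.
Qed.

Lemma cont_Rsum N (f : nat -> R -> R -> R) x y :
  (forall j, continuity_2d_pt (f j) x y) ->
  continuity_2d_pt (fun u v => Rsum N (fun j => f j u v)) x y.
Proof.
  intros H. induction N.
  - unfold Rsum; simpl. apply continuity_2d_pt_const.
  - apply continuity_2d_pt_ext with (fun u v => Rsum N (fun j => f j u v) + f N u v).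
    intros; rewrite Rsum_S; auto. apply continuity_2d_pt_plus; auto.
Qed.


Definition phi (a b : Z) (x y : R) := IZR a * x + IZR b * y.

Lemma cont_phi a b x y : continuity_2d_pt (phi a b) x y.
Proof.
  unfold phi. apply continuity_2d_pt_plus; apply continuity_2d_pt_mult; try apply continuity_2d_pt_const.
  apply continuity_2d_pt_id1. apply continuity_2d_pt_id2.
Qed.

Lemma cont_trig (c1 c2 : R) a b x y :
  continuity_2d_pt (fun u v => c1 * cos (phi a b u v) + c2 * sin (phi a b u v)) x y.
Proof.
  apply continuity_2d_pt_plus; apply continuity_2d_pt_mult; try apply continuity_2d_pt_const;
  apply (continuity_1d_2d_pt_comp _ (phi a b)); try apply cont_phi.
  apply continuity_cos. apply continuity_sin.
Qed.

Lemma der_trig_x (c1 c2 : R) a b x y :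
  is_derive (fun z => c1 * cos (phi a b z y) + c2 * sin (phi a b z y)) x
    (IZR a * (- c1 * sin (phi a b x y) + c2 * cos (phi a b x y))).
Proof. unfold phi. eapply is_derive_eq. auto_derive; auto. ring. Qed.

Lemma der_trig_y (c1 c2 : R) a b x y :
  is_derive (fun z => c1 * cos (phi a b x z) + c2 * sin (phi a b x z)) y
    (IZR b * (- c1 * sin (phi a b x y) + c2 * cos (phi a b x y))).
Proof. unfold phi. eapply is_derive_eq. auto_derive; auto. ring. Qed.

Definition Uf N (g : nat -> C) (a b : nat -> Z) x y :=
  Rsum N (fun j => fst (g j) * cos (phi (a j) (b j) x y) + (- snd (g j)) * sin (phi (a j) (b j) x y)).
Definition Vf N (g : nat -> C) (a b : nat -> Z) x y :=
  Rsum N (fun j => snd (g j) * cos (phi (a j) (b j) x y) + fst (g j) * sin (phi (a j) (b j) x y)).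
Definition Udf N (g : nat -> C) (a b c : nat -> Z) x y :=
  Rsum N (fun j => IZR (c j) * (- fst (g j) * sin (phi (a j) (b j) x y) + (- snd (g j)) * cos (phi (a j) (b j) x y))).
Definition Vdf N (g : nat -> C) (a b c : nat -> Z) x y :=
  Rsum N (fun j => IZR (c j) * (- snd (g j) * sin (phi (a j) (b j) x y) + fst (g j) * cos (phi (a j) (b j) x y))).

Definition uC N (g : nat -> C) (a b : nat -> Z) x y :=
  Csum N (fun j => Cmult (g j) (circ 0 (phi (a j) (b j) x y))).
Definition udC N (g : nat -> C) (a b c : nat -> Z) x y :=
  Csum N (fun j => Cmult (Cmult (RtoC (IZR (c j))) (g j)) (circ 0 (phi (a j) (b j) x y))).

Lemma uC_eq N g a b x y : uC N g a b x y = (Uf N g a b x y, Vf N g a b x y).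
Proof.
  unfold uC, Uf, Vf. apply Ceq; [rewrite Csum_fst | rewrite Csum_snd]; apply Rsum_ext; intros;
  unfold circ; simpl; rewrite exp_0; ring.
Qed.

Lemma udC_eq N g a b c x y : udC N g a b c x y = (Vdf N g a b c x y, - Udf N g a b c x y).
Proof.
  unfold udC, Udf, Vdf. apply Ceq; [rewrite Csum_fst | rewrite Csum_snd, <- Rsum_opp]; apply Rsum_ext; intros;
  unfold circ; simpl; rewrite exp_0; ring.
Qed.

Lemma cont_Udf N g a b c x y : continuity_2d_pt (Udf N g a b c) x y.
Proof.
  apply cont_Rsum. intros j.
  eapply continuity_2d_pt_ext; [|apply (cont_trig (IZR (c j) * - snd (g j)) (IZR (c j) * - fst (g j)) (a j) (b j))].
  intros; simpl; ring.
Qed.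
Lemma cont_Vdf N g a b c x y : continuity_2d_pt (Vdf N g a b c) x y.
Proof.
  apply cont_Rsum. intros j.
  eapply continuity_2d_pt_ext; [|apply (cont_trig (IZR (c j) * fst (g j)) (IZR (c j) * - snd (g j)) (a j) (b j))].
  intros; simpl; ring.
Qed.
Lemma cont_Uf N g a b x y : continuity_2d_pt (Uf N g a b) x y.
Proof. apply cont_Rsum. intros j. apply cont_trig. Qed.
Lemma cont_Vf N g a b x y : continuity_2d_pt (Vf N g a b) x y.
Proof.
  apply cont_Rsum. intros j. apply cont_trig.
Qed.

Lemma der_Uf_x N g a b x y : is_derive (fun z => Uf N g a b z y) x (Udf N g a b a x y).
Proof.
  unfold Uf, Udf. apply (is_derive_Rsum N (fun j z => _ ) (fun j x => _ )). intros j.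
  eapply is_derive_eq. apply der_trig_x. ring.
Qed.
Lemma der_Uf_y N g a b x y : is_derive (fun z => Uf N g a b x z) y (Udf N g a b b x y).
Proof.
  unfold Uf, Udf. apply (is_derive_Rsum N (fun j z => _ ) (fun j y => _ )). intros j.
  eapply is_derive_eq. apply der_trig_y. ring.
Qed.
Lemma der_Vf_x N g a b x y : is_derive (fun z => Vf N g a b z y) x (Vdf N g a b a x y).
Proof.
  unfold Vf, Vdf. apply (is_derive_Rsum N (fun j z => _ ) (fun j x => _ )). intros j.
  eapply is_derive_eq. apply der_trig_x. ring.
Qed.
Lemma der_Vf_y N g a b x y : is_derive (fun z => Vf N g a b x z) y (Vdf N g a b b x y).
Proof.
  unfold Vf, Vdf. apply (is_derive_Rsum N (fun j z => _ ) (fun j y => _ )). intros j.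
  eapply is_derive_eq. apply der_trig_y. ring.
Qed.

Lemma phi_px a b y : phi a b (2 * PI) y = IZR a * (2 * PI) + phi a b 0 y.
Proof. unfold phi; ring. Qed.
Lemma phi_py a b x : phi a b x (2 * PI) = IZR b * (2 * PI) + phi a b x 0.
Proof. unfold phi; ring. Qed.

Lemma per_Uf_x N g a b y : Uf N g a b 0 y = Uf N g a b (2 * PI) y.
Proof. unfold Uf; apply Rsum_ext; intros; rewrite phi_px, cos_intper, sin_intper; auto. Qed.
Lemma per_Vf_x N g a b y : Vf N g a b 0 y = Vf N g a b (2 * PI) y.
Proof. unfold Vf; apply Rsum_ext; intros; rewrite phi_px, cos_intper, sin_intper; auto. Qed.
Lemma per_Uf_y N g a b x : Uf N g a b x 0 = Uf N g a b x (2 * PI).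
Proof. unfold Uf; apply Rsum_ext; intros; rewrite phi_py, cos_intper, sin_intper; auto. Qed.
Lemma per_Vf_y N g a b x : Vf N g a b x 0 = Vf N g a b x (2 * PI).
Proof. unfold Vf; apply Rsum_ext; intros; rewrite phi_py, cos_intper, sin_intper; auto. Qed.

Lemma Cmod_E t : Cmod (circ 0 t) = 1.
Proof. rewrite Cmod_circ, exp_0; auto. Qed.

Lemma pos_Uf N g a b x y : Rsum N (fun j => Cmod (g j)) < 1 -> 0 < 1 + Uf N g a b x y.
Proof.
  intros H.
  assert (Rabs (Uf N g a b x y) < 1).
  { replace (Uf N g a b x y) with (fst (uC N g a b x y)) by (rewrite uC_eq; auto).
    eapply Rle_lt_trans. apply re_le_Cmod. eapply Rle_lt_trans. apply Cmod_Csum.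
    eapply Rle_lt_trans; [|apply H]. right. apply Rsum_ext. intros. rewrite Cmod_mult, Cmod_E. ring. }
  apply Rabs_def2 in H0. lra.
Qed.

Lemma Cdiv_eq (Ud Vd P Q : R) : 0 < P ->
  Cdiv (Vd, - Ud) (Cplus (RtoC 1) (P - 1, Q)) =
  ((P * Vd + Q * (- Ud)) / (P * P + Q * Q), - ((P * Ud + Q * Vd) / (P * P + Q * Q))).
Proof.
  intros HP. unfold Cdiv, Cinv. apply Ceq; simpl;
  replace (1 + (P - 1)) with P by ring; replace (0 + Q) with Q by ring; field; nra.
Qed.

Lemma point_eq N g a b c x y : Rsum N (fun j => Cmod (g j)) < 1 ->
  Cdiv (udC N g a b c x y) (Cplus (RtoC 1) (uC N g a b x y)) =
  (frac (fun u v => 1 + Uf N g a b u v) (Vf N g a b) (Vdf N g a b c) (fun u v => - Udf N g a b c u v) x y,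
   - frac (fun u v => 1 + Uf N g a b u v) (Vf N g a b) (Udf N g a b c) (Vdf N g a b c) x y).
Proof.
  intros H. rewrite udC_eq, uC_eq. unfold frac.
  replace (Uf N g a b x y) with ((1 + Uf N g a b x y) - 1) at 1 by ring.
  apply Cdiv_eq. apply pos_Uf; auto.
Qed.

Lemma C_core N g a b : Rsum N (fun j => Cmod (g j)) < 1 ->
  (forall x, ex_RInt (V:=C_R_CompleteNormedModule)
     (fun y => Cdiv (udC N g a b a x y) (Cplus (RtoC 1) (uC N g a b x y))) 0 (2 * PI)) /\
  is_RInt (V:=C_R_CompleteNormedModule)
     (fun x => RInt (V:=C_R_CompleteNormedModule)
        (fun y => Cdiv (udC N g a b a x y) (Cplus (RtoC 1) (uC N g a b x y))) 0 (2 * PI)) 0 (2 * PI) (RtoC 0) /\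
  (forall x, is_RInt (V:=C_R_CompleteNormedModule)
     (fun y => Cdiv (udC N g a b b x y) (Cplus (RtoC 1) (uC N g a b x y))) 0 (2 * PI) (RtoC 0)).
Proof.
  intros H.
  destruct (log_lemma (Uf N g a b) (Vf N g a b) (Udf N g a b a) (Udf N g a b b) (Vdf N g a b a) (Vdf N g a b b)
    (der_Uf_x N g a b) (der_Uf_y N g a b) (der_Vf_x N g a b) (der_Vf_y N g a b)
    (cont_Uf N g a b) (cont_Vf N g a b) (cont_Udf N g a b a) (cont_Udf N g a b b)
    (cont_Vdf N g a b a) (cont_Vdf N g a b b) (fun x y => pos_Uf N g a b x y H)
    (per_Uf_x N g a b) (per_Vf_x N g a b) (per_Uf_y N g a b) (per_Vf_y N g a b))
    as (c1 & c2 & c3 & c4 & i1 & i2 & i3 & i4).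
  cbv zeta in *.
  set (P := fun u v => 1 + Uf N g a b u v) in *.
  set (f1 := frac P (Vf N g a b) (Udf N g a b a) (Vdf N g a b a)) in *.
  set (f2 := frac P (Vf N g a b) (Vdf N g a b a) (fun u v => - Udf N g a b a u v)) in *.
  set (f3 := frac P (Vf N g a b) (Udf N g a b b) (Vdf N g a b b)) in *.
  set (f4 := frac P (Vf N g a b) (Vdf N g a b b) (fun u v => - Udf N g a b b u v)) in *.
  assert (Hin : forall x, is_RInt (V:=C_R_CompleteNormedModule)
     (fun y => Cdiv (udC N g a b a x y) (Cplus (RtoC 1) (uC N g a b x y))) 0 (2 * PI)
     (RInt (fun y => f2 x y) 0 (2 * PI), RInt (fun y => - f1 x y) 0 (2 * PI))).
  { intros x. eapply is_RInt_ext. intros y _. symmetry. apply point_eq; auto.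
    apply (is_RInt_fct_extend_pair (U:=R_NormedModule) (V:=R_NormedModule)); simpl.
    apply (RInt_correct (V:=R_CompleteNormedModule)). apply ex_RInt_cont2d; auto.
    apply (RInt_correct (V:=R_CompleteNormedModule)). apply (ex_RInt_opp (V:=R_CompleteNormedModule) (fun y => f1 x y)).
    apply ex_RInt_cont2d; auto. }
  split; [|split].
  - intros x. eexists. apply Hin.
  - eapply is_RInt_ext. intros x _. symmetry. apply is_RInt_unique. apply Hin.
    apply (is_RInt_fct_extend_pair (U:=R_NormedModule) (V:=R_NormedModule)); simpl.
    apply i2.
    eapply is_RInt_ext. intros x _. symmetry. apply (RInt_opp (V:=R_CompleteNormedModule) (fun y => f1 x y)).
    apply ex_RInt_cont2d; auto.
    assert (i1' := is_RInt_opp (V:=R_NormedModule) _ _ _ _ i1). replace (opp (0:R_NormedModule)) with 0 in i1' by (unfold opp; simpl; ring). apply i1'.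
  - intros x. eapply is_RInt_ext. intros y _. symmetry. apply point_eq; auto.
    apply (is_RInt_fct_extend_pair (U:=R_NormedModule) (V:=R_NormedModule)); simpl.
    apply i4.
    assert (i3' := is_RInt_opp (V:=R_NormedModule) _ _ _ _ (i3 x)). replace (opp (0:R_NormedModule)) with 0 in i3' by (unfold opp; simpl; ring). apply i3'.
Qed.

Definition rho (b : nat -> Z * Z) (w : R * R) j := IZR (fst (b j)) * fst w + IZR (snd (b j)) * snd w.

Definition dominant N b (a : nat -> C) w i0 :=
  Rsum N (fun j => if Nat.eqb j i0 then 0 else Cmod (a j) * exp (rho b w j)) < Cmod (a i0) * exp (rho b w i0).

Lemma Csum_split N (f : nat -> C) i0 : (i0 < N)%nat ->
  Csum N f = Cplus (f i0) (Csum N (fun j => if Nat.eqb j i0 then RtoC 0 else f j)).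
Proof.
  intros H. replace (f i0) with (Csum N (fun j => if Nat.eqb j i0 then f i0 else RtoC 0)) by (apply Csum_delta; auto).
  rewrite <- Csum_plus.
  apply Csum_ext. intros j _. destruct (Nat.eqb_spec j i0); subst; ring.
Qed.

Lemma not_amoeba N b a w i0 : (i0 < N)%nat -> dominant N b a w i0 -> ~ amoeba N b a w.
Proof.
  intros Hi Hd (X & Y & HX & HY & H0 & H1 & H2).
  unfold Hpoly in H0. rewrite (Csum_split _ _ i0 Hi) in H0.
  assert (E : Cmult (a i0) (monom b i0 X Y) =
              Copp (Csum N (fun j => if Nat.eqb j i0 then RtoC 0 else Cmult (a j) (monom b j X Y)))).
  { set (S := Csum N _) in *. set (T := Cmult (a i0) (monom b i0 X Y)) in *.
    replace T with (Cplus (Cplus T S) (Copp S)) by ring. rewrite H0. ring. }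
  apply (f_equal Cmod) in E. rewrite Cmod_opp, Cmod_mult, Cmod_monom in E by auto.
  rewrite H1, H2 in E. fold (rho b w i0) in E.
  assert (Cmod (Csum N (fun j => if Nat.eqb j i0 then RtoC 0 else Cmult (a j) (monom b j X Y)))
          <= Rsum N (fun j => if Nat.eqb j i0 then 0 else Cmod (a j) * exp (rho b w j))).
  { eapply Rle_trans. apply Cmod_Csum. right. apply Rsum_ext. intros j _.
    destruct (Nat.eqb_spec j i0). apply Cmod_0. rewrite Cmod_mult, Cmod_monom, H1, H2 by auto. reflexivity. }
  unfold dominant in Hd. lra.
Qed.

Lemma order_from N b a (G : C -> C -> C) w (Q : R -> R -> C) (m : R) :
  (forall t1 t2, Cdiv (G (circ (fst w) t1) (circ (snd w) t2)) (Hpoly N b a (circ (fst w) t1) (circ (snd w) t2))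
                 = Cplus (RtoC m) (Q t1 t2)) ->
  (forall t1, ex_RInt (V:=C_R_CompleteNormedModule) (fun t2 => Q t1 t2) 0 (2 * PI)) ->
  is_RInt (V:=C_R_CompleteNormedModule) (fun t1 => RInt (V:=C_R_CompleteNormedModule) (fun t2 => Q t1 t2) 0 (2 * PI)) 0 (2 * PI) (RtoC 0) ->
  order_coord N b a G w = RtoC m.
Proof.
  intros HQ Hex Hout. unfold order_coord.
  assert (Hin : forall t1, is_RInt (V:=C_R_CompleteNormedModule)
     (fun t2 => let X := circ (fst w) t1 in let Y := circ (snd w) t2 in
                Cmult (Cdiv (G X Y) (Hpoly N b a X Y)) (Cmult Ci Ci)) 0 (2 * PI)
     (opp (plus (scal (2 * PI - 0) (RtoC m)) (RInt (V:=C_R_CompleteNormedModule) (fun t2 => Q t1 t2) 0 (2 * PI))))).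
  { intros t1. eapply is_RInt_ext.
    2: apply (is_RInt_opp (V:=C_R_NormedModule)), (is_RInt_plus (V:=C_R_NormedModule));
       [apply (is_RInt_const (V:=C_R_NormedModule))| apply (RInt_correct (V:=C_R_CompleteNormedModule)), Hex].
    intros t2 _. cbv zeta. rewrite HQ. apply Ceq; simpl; unfold opp, plus; simpl; ring. }
  rewrite (RInt_ext _ _ _ _ (fun t1 _ => is_RInt_unique _ _ _ _ (Hin t1))).
  assert (Ho : is_RInt (V:=C_R_CompleteNormedModule)
     (fun t1 => opp (plus (scal (2 * PI - 0) (RtoC m)) (RInt (V:=C_R_CompleteNormedModule) (fun t2 => Q t1 t2) 0 (2 * PI))))
     0 (2 * PI) (opp (plus (scal (2 * PI - 0) (scal (2 * PI - 0) (RtoC m))) (RtoC 0)))).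
  { apply (is_RInt_opp (V:=C_R_NormedModule)), (is_RInt_plus (V:=C_R_NormedModule));
       [apply (is_RInt_const (V:=C_R_NormedModule))| apply Hout]. }
  rewrite (is_RInt_unique _ _ _ _ Ho).
  pose proof PI_RGT_0.
  apply Ceq; simpl; unfold opp, plus, scal; simpl; unfold mult; simpl; field; lra.
Qed.

Definition gco (b : nat -> Z * Z) (a : nat -> C) (w : R * R) (i0 : nat) : nat -> C :=
  fun j => if Nat.eqb j i0 then RtoC 0
           else Cdiv (Cmult (a j) (RtoC (exp (rho b w j)))) (Cmult (a i0) (RtoC (exp (rho b w i0)))).

Lemma dom_a0 N b a w i0 : dominant N b a w i0 -> a i0 <> RtoC 0.
Proof.
  intros H E. unfold dominant in H. rewrite E, Cmod_0 in H.
  assert (0 <= Rsum N (fun j => if Nat.eqb j i0 then 0 else Cmod (a j) * exp (rho b w j))).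
  { apply Rsum_nonneg. intros j _. destruct (Nat.eqb j i0). lra.
    apply Rmult_le_pos. apply Cmod_ge_0. left; apply exp_pos. }
  lra.
Qed.

Lemma RtoC_neq0 r : r <> 0 -> RtoC r <> RtoC 0.
Proof. intros H E. apply H. apply (f_equal fst) in E. auto. Qed.

Lemma gco_small N b a w i0 : dominant N b a w i0 -> Rsum N (fun j => Cmod (gco b a w i0 j)) < 1.
Proof.
  intros H. pose proof (dom_a0 _ _ _ _ _ H) as Ha.
  assert (Hk : 0 < Cmod (a i0) * exp (rho b w i0)).
  { apply Rmult_lt_0_compat. apply Cmod_gt_0; auto. apply exp_pos. }
  unfold dominant in H.
  rewrite (Rsum_ext _ _ (fun j => / (Cmod (a i0) * exp (rho b w i0)) *
       (if Nat.eqb j i0 then 0 else Cmod (a j) * exp (rho b w j)))).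
  rewrite Rsum_scal. apply Rmult_lt_reg_l with (Cmod (a i0) * exp (rho b w i0)); auto.
  rewrite <- Rmult_assoc, Rinv_r, Rmult_1_l, Rmult_1_r by lra. auto.
  intros j _. unfold gco. destruct (Nat.eqb j i0). rewrite Cmod_0; ring.
  rewrite Cmod_div, !Cmod_mult, !Cmod_R, !Rabs_pos_eq by (try (left; apply exp_pos);
     apply Cmult_neq_0; auto; apply RtoC_neq0; apply Rgt_not_eq, exp_pos).
  field. split. apply Rgt_not_eq, exp_pos. apply Rgt_not_eq, Cmod_gt_0; auto.
Qed.

Definition Gpr N (b : nat -> Z * Z) (a : nat -> C) (pr : Z * Z -> Z) (X Y : C) : C :=
  Csum N (fun i => Cmult (Cmult (a i) (RtoC (IZR (pr (b i))))) (monom b i X Y)).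
Definition dif (b : nat -> Z * Z) (i0 : nat) (pr : Z * Z -> Z) : nat -> Z :=
  fun j => (pr (b j) - pr (b i0))%Z.

Lemma circ_neq0 r t : circ r t <> RtoC 0.
Proof. intro E. apply (f_equal Cmod) in E. rewrite Cmod_circ, Cmod_0 in E. pose proof (exp_pos r); lra. Qed.

Lemma decomp N b a w i0 pr t1 t2 : (i0 < N)%nat -> dominant N b a w i0 ->
  Cdiv (Gpr N b a pr (circ (fst w) t1) (circ (snd w) t2)) (Hpoly N b a (circ (fst w) t1) (circ (snd w) t2)) =
  Cplus (RtoC (IZR (pr (b i0))))
    (Cdiv (udC N (gco b a w i0) (dif b i0 fst) (dif b i0 snd) (dif b i0 pr) t1 t2)
          (Cplus (RtoC 1) (uC N (gco b a w i0) (dif b i0 fst) (dif b i0 snd) t1 t2))).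
Proof.
  intros Hi Hd.
  pose proof (dom_a0 _ _ _ _ _ Hd) as Ha.
  set (g := gco b a w i0).
  set (E' := fun j => circ 0 (phi (dif b i0 fst j) (dif b i0 snd j) t1 t2)).
  set (c0 := Cmult (a i0) (circ (rho b w i0) (phi (fst (b i0)) (snd (b i0)) t1 t2))).
  assert (Hc0 : c0 <> RtoC 0) by (apply Cmult_neq_0; auto; apply circ_neq0).
  assert (T1 : forall j, Cmult (a j) (monom b j (circ (fst w) t1) (circ (snd w) t2)) =
                         Cmult c0 (Cplus (if Nat.eqb j i0 then RtoC 1 else RtoC 0) (Cmult (g j) (E' j)))).
  { intros j. rewrite monom_circ. unfold g, gco, c0.
    destruct (Nat.eqb_spec j i0). subst. unfold rho, phi. ring.
    assert (EE : circ 0 (phi (fst (b j)) (snd (b j)) t1 t2) = Cmult (circ 0 (phi (fst (b i0)) (snd (b i0)) t1 t2)) (E' j)).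
    { unfold E'. rewrite circ_mult. f_equal. ring. unfold phi, dif. rewrite !minus_IZR. ring. }
    change (IZR (fst (b j)) * fst w + IZR (snd (b j)) * snd w) with (rho b w j).
    change (IZR (fst (b j)) * t1 + IZR (snd (b j)) * t2) with (phi (fst (b j)) (snd (b j)) t1 t2).
    rewrite (circ_split (rho b w j)), (circ_split (rho b w i0)), EE.
    field. split; auto. apply RtoC_neq0, Rgt_not_eq, exp_pos. }
  assert (Hu : Cplus (RtoC 1) (uC N g (dif b i0 fst) (dif b i0 snd) t1 t2) <> RtoC 0).
  { intro E. apply (f_equal fst) in E. rewrite uC_eq in E. simpl in E.
    pose proof (pos_Uf N g (dif b i0 fst) (dif b i0 snd) t1 t2 (gco_small _ _ _ _ _ Hd)). lra. }
  assert (HH : Hpoly N b a (circ (fst w) t1) (circ (snd w) t2) =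
               Cmult c0 (Cplus (RtoC 1) (uC N g (dif b i0 fst) (dif b i0 snd) t1 t2))).
  { unfold Hpoly. rewrite (Csum_ext _ _ _ (fun j _ => T1 j)), Csum_scal, Csum_plus, Csum_delta by auto.
    reflexivity. }
  assert (HG : Gpr N b a pr (circ (fst w) t1) (circ (snd w) t2) =
               Cmult c0 (Cplus (Cmult (RtoC (IZR (pr (b i0)))) (Cplus (RtoC 1) (uC N g (dif b i0 fst) (dif b i0 snd) t1 t2)))
                               (udC N g (dif b i0 fst) (dif b i0 snd) (dif b i0 pr) t1 t2))).
  { unfold Gpr.
    rewrite (Csum_ext _ _ (fun j => Cmult c0 (Cplus (Cplus (if Nat.eqb j i0 then RtoC (IZR (pr (b i0))) else RtoC 0)
               (Cmult (RtoC (IZR (pr (b i0)))) (Cmult (g j) (E' j))))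
               (Cmult (Cmult (RtoC (IZR (dif b i0 pr j))) (g j)) (E' j))))).
    rewrite Csum_scal, !Csum_plus, Csum_delta, Csum_scal by auto. unfold uC, udC, E'. ring.
    intros j _. rewrite <- Cmult_assoc, (Cmult_comm (RtoC _)), Cmult_assoc, T1.
    unfold g, gco, dif. destruct (Nat.eqb_spec j i0). subst. ring.
    rewrite minus_IZR. unfold RtoC. apply Ceq; simpl; ring. }
  rewrite HH, HG. field. auto.
Qed.

Lemma is_RInt_R0 a b : is_RInt (fun _ : R => 0) a b 0.
Proof. assert (H := is_RInt_const (V:=R_NormedModule) a b 0). unfold scal in H; simpl in H; unfold mult in H; simpl in H.
  rewrite Rmult_0_r in H. exact H. Qed.
Lemma is_RInt_C0 a b : is_RInt (V:=C_R_NormedModule) (fun _ => RtoC 0) a b (RtoC 0).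
Proof. apply (is_RInt_fct_extend_pair (U:=R_NormedModule)(V:=R_NormedModule)); apply is_RInt_R0. Qed.

Lemma analytic N b a w i0 : (i0 < N)%nat -> dominant N b a w i0 ->
  ~ amoeba N b a w /\
  amoeba_order N b a w = (RtoC (IZR (fst (b i0))), RtoC (IZR (snd (b i0)))).
Proof.
  intros Hi Hd. split. apply (not_amoeba _ _ _ _ _ Hi Hd).
  destruct (C_core N (gco b a w i0) (dif b i0 fst) (dif b i0 snd) (gco_small _ _ _ _ _ Hd)) as (Ex & Ix & Iy).
  unfold amoeba_order. f_equal.
  - apply (order_from _ _ _ _ _ (fun t1 t2 => Cdiv (udC N (gco b a w i0) (dif b i0 fst) (dif b i0 snd) (dif b i0 fst) t1 t2)
          (Cplus (RtoC 1) (uC N (gco b a w i0) (dif b i0 fst) (dif b i0 snd) t1 t2)))).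
    intros. apply (decomp N b a w i0 fst t1 t2 Hi Hd).
    apply Ex. apply Ix.
  - apply (order_from _ _ _ _ _ (fun t1 t2 => Cdiv (udC N (gco b a w i0) (dif b i0 fst) (dif b i0 snd) (dif b i0 snd) t1 t2)
          (Cplus (RtoC 1) (uC N (gco b a w i0) (dif b i0 fst) (dif b i0 snd) t1 t2)))).
    intros. apply (decomp N b a w i0 snd t1 t2 Hi Hd).
    intros t1. eexists. apply Iy.
    eapply is_RInt_ext. intros t1 _. symmetry. apply is_RInt_unique. apply Iy.
    apply is_RInt_C0.
Qed.

Definition dl (x j : nat) : R := if Nat.eqb x j then 1 else 0.

Definition lvec (m n : Z) (j0 : nat) : nat -> Q := fun x =>
  ((if Nat.eqb x j0 then 1 else 0) - (if Nat.eqb x 0 then inject_Z m else 0)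
   - (if Nat.eqb x 1 then inject_Z n else 0) - (if Nat.eqb x 2 then inject_Z (1 - m - n) else 0))%Q.

Lemma Q2R_inject_Z z : Q2R (inject_Z z) = IZR z.
Proof. unfold Q2R; simpl. field. Qed.

Lemma Q2R_0 : Q2R 0%Q = 0.
Proof. unfold Q2R; simpl. field. Qed.
Lemma Q2R_1 : Q2R 1%Q = 1.
Proof. unfold Q2R; simpl. field. Qed.

Lemma Q2R_if (c : bool) (x : Q) : Q2R (if c then x else 0%Q) = if c then Q2R x else 0.
Proof. destruct c; auto. apply Q2R_0. Qed.

Lemma Q2R_lvec m n j0 x : Q2R (lvec m n j0 x) =
  dl x j0 - IZR m * dl x 0 - IZR n * dl x 1 - IZR (1 - m - n) * dl x 2.
Proof.
  unfold lvec, dl. rewrite !Q2R_minus, !Q2R_if, !Q2R_inject_Z, Q2R_1.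
  destruct (Nat.eqb x j0), (Nat.eqb x 0), (Nat.eqb x 1), (Nat.eqb x 2); ring.
Qed.

Lemma Rsum_dl N f j : (j < N)%nat -> Rsum N (fun x => f x * dl x j) = f j.
Proof.
  intros H. rewrite <- (Rsum_delta N j (f j)) by auto. apply Rsum_ext. intros x _. unfold dl.
  destruct (Nat.eqb_spec x j); subst; ring.
Qed.

Lemma Rsum_lvec N f m n j0 : (j0 < N)%nat -> (3 <= N)%nat ->
  Rsum N (fun x => f x * Q2R (lvec m n j0 x)) =
  f j0 - IZR m * f 0%nat - IZR n * f 1%nat - IZR (1 - m - n) * f 2%nat.
Proof.
  intros H1 H2.
  rewrite (Rsum_ext _ _ (fun x => f x * dl x j0 + (- IZR m) * (f x * dl x 0) + (- IZR n) * (f x * dl x 1)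
                                 + (- IZR (1 - m - n)) * (f x * dl x 2))).
  rewrite !Rsum_plus, !Rsum_scal, !Rsum_dl by lia. ring.
  intros x _. rewrite Q2R_lvec. ring.
Qed.

Lemma inLQ_lvec N b j0 : b 0%nat = (1%Z, 0%Z) -> b 1%nat = (0%Z, 1%Z) -> b 2%nat = (0%Z, 0%Z) ->
  (j0 < N)%nat -> (3 <= N)%nat ->
  inLQ N b (lvec (fst (b j0)) (snd (b j0)) j0).
Proof.
  intros B0 B1 B2 H1 H2. unfold inLQ. repeat split; apply eqR_Qeq; rewrite Q2R_Qsum, Q2R_0.
  - rewrite (Rsum_ext _ _ (fun x => IZR (fst (b x)) * Q2R (lvec (fst (b j0)) (snd (b j0)) j0 x))).
    rewrite Rsum_lvec by auto. rewrite B0, B1, B2. simpl. ring.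
    intros; rewrite Q2R_mult, Q2R_inject_Z; ring.
  - rewrite (Rsum_ext _ _ (fun x => IZR (snd (b x)) * Q2R (lvec (fst (b j0)) (snd (b j0)) j0 x))).
    rewrite Rsum_lvec by auto. rewrite B0, B1, B2. simpl. ring.
    intros; rewrite Q2R_mult, Q2R_inject_Z; ring.
  - rewrite (Rsum_ext _ _ (fun x => 1 * Q2R (lvec (fst (b j0)) (snd (b j0)) j0 x))).
    rewrite Rsum_lvec by auto. rewrite !minus_IZR. simpl. ring.
    intros; ring.
Qed.

Definition sR (s : tri -> nat -> nat -> nat) (sg : tri) (k j : nat) : R :=
  if in_trib sg j then 0 else INR (s sg k j).

Lemma Q2R_sterm (s : tri -> nat -> nat -> nat) sg k j (l : nat -> Q) :
  Q2R (if in_trib sg j then 0%Q else (inject_Z (Z.of_nat (s sg k j)) * l j)%Q) = sR s sg k j * Q2R (l j).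
Proof.
  unfold sR. destruct (in_trib sg j). rewrite Q2R_0; ring.
  rewrite Q2R_mult, Q2R_inject_Z, <- INR_IZR_INZ. ring.
Qed.

Lemma affine_k N p b h s sg1 sg k :
  b 0%nat = (1%Z, 0%Z) -> b 1%nat = (0%Z, 1%Z) -> b 2%nat = (0%Z, 0%Z) -> (3 <= N)%nat ->
  H_expansion N p b h s sg1 -> H_expansion N p b h s sg -> (k < p)%nat ->
  forall j, (j < N)%nat ->
  let d := fun x => sR s sg1 k x - sR s sg k x in
  d j = IZR (fst (b j)) * d 0%nat + IZR (snd (b j)) * d 1%nat
        + (1 - IZR (fst (b j)) - IZR (snd (b j))) * d 2%nat.
Proof.
  intros B0 B1 B2 HN E1 E2 Hk j Hj d.
  assert (L := inLQ_lvec N b j B0 B1 B2 Hj HN).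
  pose proof (E1 k Hk _ L) as X1. pose proof (E2 k Hk _ L) as X2.
  apply Qeq_eqR in X1. apply Qeq_eqR in X2. rewrite !Q2R_Qsum in X1, X2.
  rewrite X1 in X2. clear X1.
  rewrite !(Rsum_ext _ (fun x => Q2R (if in_trib _ x then 0%Q else _)) (fun x => sR s _ k x * Q2R (lvec (fst (b j)) (snd (b j)) j x)))
    in X2 by (intros; apply Q2R_sterm).
  rewrite !Rsum_lvec in X2 by auto. rewrite minus_IZR, minus_IZR in X2. unfold d. lra.
Qed.

Definition ins (r k : nat) : nat := if Nat.ltb k r then k else S k.
Definition unins (r k : nat) : nat := if Nat.ltb k r then k else pred k.

Lemma Rsum_ins F r p' : (r <= p')%nat -> Rsum (S p') F = F r + Rsum p' (fun k => F (ins r k)).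
Proof.
  induction p'; intros H.
  - assert (r = 0%nat) by lia. subst. unfold Rsum; simpl. lra.
  - destruct (Nat.eq_dec r (S p')).
    + subst. rewrite Rsum_S. rewrite (Rsum_ext (S p') (fun k => F (ins (S p') k)) F). lra.
      intros k Hk. unfold ins. destruct (Nat.ltb_spec k (S p')); [auto|lia].
    + rewrite Rsum_S, IHp' by lia. rewrite (Rsum_S p').
      assert (E : ins r p' = S p') by (unfold ins; destruct (Nat.ltb_spec p' r); [lia|auto]).
      rewrite E. lra.
Qed.

Lemma Qnz_R (x : Q) : ~ x == 0 -> Q2R x <> 0.
Proof. intros H E. apply H. apply eqR_Qeq. rewrite E, Q2R_0. auto. Qed.

Lemma dep (cols : list nat) : forall p (M : nat -> nat -> Q), (length cols < p)%nat ->
  exists c : nat -> Q, (exists k, (k < p)%nat /\ ~ c k == 0) /\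
    forall j, In j cols -> Qsum p (fun k => c k * M k j)%Q == 0.
Proof.
  induction cols as [|j cols IH]; intros p M Hl.
  - exists (fun _ => 1%Q). split. exists 0%nat. split. simpl in Hl; lia. discriminate.
    intros j [].
  - simpl in Hl.
    destruct (classic (exists r, (r < p)%nat /\ ~ M r j == 0)) as [[r [Hr HM]]|HN].
    + destruct p as [|p']. lia.
      set (M' := fun k' j' => (M (ins r k') j' - (M (ins r k') j / M r j) * M r j')%Q).
      destruct (IH p' M') as [c' [[k0 [Hk0 Hc0]] Hc']]. lia.
      set (Sj := Qsum p' (fun k' => c' k' * M (ins r k') j)%Q).
      exists (fun k => if Nat.eqb k r then (- Sj / M r j)%Q else c' (unins r k)).
      assert (Hinsr : forall k', ins r k' <> r) by (intros k'; unfold ins; destruct (Nat.ltb_spec k' r); lia).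
      assert (Hun : forall k', unins r (ins r k') = k') by
        (intros k'; unfold ins, unins; destruct (Nat.ltb_spec k' r); [rewrite (proj2 (Nat.ltb_lt _ _)) by auto; auto|
          destruct (Nat.ltb_spec (S k') r); [lia|auto]]).
      assert (Hsum : forall j', Q2R (Qsum (S p') (fun k => (if Nat.eqb k r then (- Sj / M r j)%Q else c' (unins r k)) * M k j')%Q)
                  = - Q2R Sj / Q2R (M r j) * Q2R (M r j') + Rsum p' (fun k' => Q2R (c' k') * Q2R (M (ins r k') j'))).
      { intros j'. rewrite Q2R_Qsum, (Rsum_ins _ r p') by lia. rewrite Nat.eqb_refl.
        f_equal. rewrite Q2R_mult, Q2R_div, Q2R_opp by auto. reflexivity.
        apply Rsum_ext. intros k' _. destruct (Nat.eqb_spec (ins r k') r). exfalso; eapply Hinsr; eauto.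
        rewrite Hun, Q2R_mult. auto. }
      split.
      * exists (ins r k0). split. unfold ins; destruct (Nat.ltb_spec k0 r); lia.
        destruct (Nat.eqb_spec (ins r k0) r). exfalso; eapply Hinsr; eauto. rewrite Hun. auto.
      * intros j' Hj'. apply eqR_Qeq. rewrite Hsum, Q2R_0.
        assert (HMr := Qnz_R _ HM).
        assert (ES : Q2R Sj = Rsum p' (fun k' => Q2R (c' k') * Q2R (M (ins r k') j))).
        { unfold Sj. rewrite Q2R_Qsum. apply Rsum_ext. intros; apply Q2R_mult. }
        destruct Hj' as [<-|Hj'].
        -- rewrite ES. field. auto.
        -- pose proof (Hc' j' Hj') as Z. apply Qeq_eqR in Z. rewrite Q2R_Qsum, Q2R_0 in Z.
           rewrite (Rsum_ext _ _ (fun k' => Q2R (c' k') * Q2R (M' k' j') + (Q2R (M r j') / Q2R (M r j)) * (Q2R (c' k') * Q2R (M (ins r k') j)))).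
           rewrite Rsum_plus, Rsum_scal, <- ES.
           rewrite (Rsum_ext _ _ (fun k' => Q2R (c' k' * M' k' j')%Q)) by (intros; symmetry; apply Q2R_mult). rewrite Z.
           field. auto.
           intros k' _. unfold M'. rewrite Q2R_minus, Q2R_mult, Q2R_div by auto. field. auto.
    + destruct (IH p M) as [c [Hc1 Hc2]]. lia.
      exists c. split; auto. intros j' [<-|Hj']; auto.
      apply eqR_Qeq. rewrite Q2R_Qsum, Q2R_0. rewrite (Rsum_ext _ _ (fun _ => 0)).
      rewrite Rsum_const; ring.
      intros k Hk. rewrite Q2R_mult. assert (M k j == 0). { apply NNPP. intro. apply HN. eauto. }
      apply Qeq_eqR in H. rewrite H, Q2R_0. ring.
Qed.

Lemma in_trib_iff sg j : in_trib sg j = true <-> In j (tri_idx sg).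
Proof.
  unfold in_trib. rewrite existsb_exists. split.
  - intros [x [Hx E]]. apply Nat.eqb_eq in E. subst; auto.
  - intros H. exists j. split; auto. apply Nat.eqb_refl.
Qed.

Definition detZ (b : nat -> Z * Z) (i p r : nat) : Z :=
  ((fst (b p) - fst (b i)) * (snd (b r) - snd (b i)) - (snd (b p) - snd (b i)) * (fst (b r) - fst (b i)))%Z.

Lemma area_distinct b x y z : twice_area b (x, y, z) = 1%Z -> x <> y /\ y <> z /\ x <> z.
Proof.
  unfold twice_area. intros H. repeat split; intro E; subst.
  - replace ((fst (b y) - fst (b y)) * (snd (b z) - snd (b y)) - (snd (b y) - snd (b y)) * (fst (b z) - fst (b y)))%Z with 0%Z in H by ring. discriminate.
  - replace ((fst (b z) - fst (b x)) * (snd (b z) - snd (b x)) - (snd (b z) - snd (b x)) * (fst (b z) - fst (b x)))%Z with 0%Z in H by ring. discriminate.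
  - replace ((fst (b y) - fst (b z)) * (snd (b z) - snd (b z)) - (snd (b y) - snd (b z)) * (fst (b z) - fst (b z)))%Z with 0%Z in H by ring. discriminate.
Qed.

Lemma tri_choice b sg i : twice_area b sg = 1%Z -> In i (tri_idx sg) ->
  exists p r, In p (tri_idx sg) /\ In r (tri_idx sg) /\ Z.abs (detZ b i p r) = 1%Z /\
    forall j, In j (tri_idx sg) -> j = i \/ j = p \/ j = r.
Proof.
  destruct sg as [[x y] z]. simpl. intros H Hi.
  destruct Hi as [<-|[<-|[<-|[]]]].
  - exists y, z. repeat split; auto. intros j Hj; simpl in Hj; destruct Hj as [<-|[<-|[<-|[]]]]; auto.
  - exists x, z. repeat split; auto.
    unfold detZ. rewrite <- H. unfold twice_area.
    rewrite <- Z.abs_opp. f_equal. ring.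
    intros j Hj; simpl in Hj; destruct Hj as [<-|[<-|[<-|[]]]]; auto.
  - exists x, y. repeat split; auto.
    unfold detZ. rewrite <- H. unfold twice_area. f_equal. ring.
    intros j Hj; simpl in Hj; destruct Hj as [<-|[<-|[<-|[]]]]; auto.
Qed.

Lemma col_nonzero N p s sg j : N = (p + 3)%nat -> nondegenerate N p s sg ->
  (forall i, In i (tri_idx sg) -> (i < N)%nat) -> NoDup (tri_idx sg) ->
  (j < N)%nat -> in_trib sg j = false -> exists k, (k < p)%nat /\ (1 <= s sg k j)%nat.
Proof.
  intros HN Hnd Hlt Hnd2 Hj Hnot.
  apply NNPP. intros Hc.
  assert (Z0 : forall k, (k < p)%nat -> s sg k j = 0%nat).
  { intros k Hk. destruct (s sg k j) eqn:E; auto. exfalso; apply Hc; exists k; split; auto; lia. }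
  set (cols := filter (fun j' => negb (in_trib sg j') && negb (Nat.eqb j' j)) (seq 0 N)).
  assert (Hlen : (length cols < p)%nat).
  { pose proof (filter_length (fun j' => negb (in_trib sg j') && negb (Nat.eqb j' j)) (seq 0 N)) as FL.
    rewrite length_seq in FL. fold cols in FL.
    assert (4 <= length (filter (fun x => negb (negb (in_trib sg x) && negb (Nat.eqb x j))) (seq 0 N)))%nat.
    { assert (L3 : length (tri_idx sg) = 3%nat) by (destruct sg as [[? ?] ?]; reflexivity).
      replace 4%nat with (length (j :: tri_idx sg)) by (simpl; lia).
      apply NoDup_incl_length.
      - constructor; auto. intro Hin. apply in_trib_iff in Hin. congruence.
      - intros x Hx. apply filter_In. split.
        + apply in_seq. split. lia. simpl in Hx. destruct Hx as [<-|Hx]. lia. rewrite Nat.add_0_l. apply Hlt; auto.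
        + destruct Hx as [<-|Hx]. rewrite Nat.eqb_refl, andb_false_r. auto.
          apply in_trib_iff in Hx. rewrite Hx. auto. }
    lia. }
  destruct (dep cols p (fun k j' => inject_Z (Z.of_nat (s sg k j')))) as [c [[k0 [Hk0 Hc0]] Horth]]; auto.
  apply Hc0. apply (Hnd c); auto.
  intros j' Hj' Hn'. destruct (Nat.eq_dec j' j).
  - subst j'. apply eqR_Qeq. rewrite Q2R_Qsum, Q2R_0. rewrite (Rsum_ext _ _ (fun _ => 0)).
    rewrite Rsum_const; ring.
    intros k Hk. rewrite Z0 by auto. rewrite Q2R_mult. rewrite Q2R_inject_Z. simpl. ring.
  - apply Horth. unfold cols. apply filter_In. split. apply in_seq; lia.
    rewrite Hn'. simpl. destruct (Nat.eqb_spec j' j); auto.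
Qed.

Lemma exp_le_mono x y : x <= y -> exp x <= exp y.
Proof. intros H. destruct (Rle_lt_or_eq_dec _ _ H) as [L|L]; [left; apply exp_increasing; auto| rewrite L; lra]. Qed.

Definition Mb N (b : nat -> Z * Z) := Rsum N (fun j => Rabs (IZR (fst (b j))) + Rabs (IZR (snd (b j)))).

Lemma Mb_bound N b x : (x < N)%nat -> Rabs (IZR (fst (b x))) <= Mb N b /\ Rabs (IZR (snd (b x))) <= Mb N b.
Proof.
  intros H. assert (Rabs (IZR (fst (b x))) + Rabs (IZR (snd (b x))) <= Mb N b).
  { apply (Rsum_single_le N (fun j => Rabs (IZR (fst (b j))) + Rabs (IZR (snd (b j))))); auto.
    intros; pose proof (Rabs_pos (IZR (fst (b j)))); pose proof (Rabs_pos (IZR (snd (b j)))); lra. }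
  pose proof (Rabs_pos (IZR (fst (b x)))); pose proof (Rabs_pos (IZR (snd (b x)))); lra.
Qed.

Lemma abs_between a M : Rabs a <= M -> - M <= a <= M.
Proof. unfold Rabs; destruct (Rcase_abs a); lra. Qed.

Definition dotv (v1 v2 : R) (b : nat -> Z * Z) (j i : nat) :=
  v1 * (IZR (fst (b j)) - IZR (fst (b i))) + v2 * (IZR (snd (b j)) - IZR (snd (b i))).

Lemma vchoice N b i p r : (i < N)%nat -> (p < N)%nat -> (r < N)%nat -> Z.abs (detZ b i p r) = 1%Z ->
  exists v1 v2, dotv v1 v2 b p i = -2 /\ dotv v1 v2 b r i = -2 /\
    forall j, (j < N)%nat -> dotv v1 v2 b j i <= 16 * (Mb N b * Mb N b).
Proof.
  intros Hi Hp Hr Hd.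
  assert (Hs : detZ b i p r = 1%Z \/ detZ b i p r = (-1)%Z) by lia.
  set (sg := IZR (detZ b i p r)).
  assert (Hsg : sg * sg = 1 /\ (sg = 1 \/ sg = -1)) by (unfold sg; destruct Hs as [E|E]; rewrite E; simpl; split; lra).
  assert (Edet : sg = (IZR (fst (b p)) - IZR (fst (b i))) * (IZR (snd (b r)) - IZR (snd (b i)))
                    - (IZR (snd (b p)) - IZR (snd (b i))) * (IZR (fst (b r)) - IZR (fst (b i)))).
  { unfold sg, detZ. rewrite minus_IZR, !mult_IZR, !minus_IZR. reflexivity. }
  exists (-2 * sg * (IZR (snd (b r)) - IZR (snd (b p)))), (-2 * sg * (IZR (fst (b p)) - IZR (fst (b r)))).
  unfold dotv. repeat split.
  - replace (-2 * sg * (IZR (snd (b r)) - IZR (snd (b p))) * (IZR (fst (b p)) - IZR (fst (b i))) +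
             -2 * sg * (IZR (fst (b p)) - IZR (fst (b r))) * (IZR (snd (b p)) - IZR (snd (b i))))
      with (-2 * sg * sg) by (rewrite Edet at 2; ring). lra.
  - replace (-2 * sg * (IZR (snd (b r)) - IZR (snd (b p))) * (IZR (fst (b r)) - IZR (fst (b i))) +
             -2 * sg * (IZR (fst (b p)) - IZR (fst (b r))) * (IZR (snd (b r)) - IZR (snd (b i))))
      with (-2 * sg * sg) by (rewrite Edet at 2; ring). lra.
  - intros j Hj. set (M := Mb N b).
    destruct (Mb_bound N b i Hi) as [A1 A2]. destruct (Mb_bound N b p Hp) as [B1 B2].
    destruct (Mb_bound N b r Hr) as [C1 C2]. destruct (Mb_bound N b j Hj) as [D1 D2].
    apply abs_between in A1, A2, B1, B2, C1, C2, D1, D2. fold M in A1, A2, B1, B2, C1, C2, D1, D2.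
    set (x1 := IZR (snd (b r)) - IZR (snd (b p))). set (y1 := IZR (fst (b j)) - IZR (fst (b i))).
    set (x2 := IZR (fst (b p)) - IZR (fst (b r))). set (y2 := IZR (snd (b j)) - IZR (snd (b i))).
    assert (X1 : - (2 * M) <= x1 <= 2 * M) by (unfold x1; lra).
    assert (X2 : - (2 * M) <= x2 <= 2 * M) by (unfold x2; lra).
    assert (Y1 : - (2 * M) <= y1 <= 2 * M) by (unfold y1; lra).
    assert (Y2 : - (2 * M) <= y2 <= 2 * M) by (unfold y2; lra).
    assert (P1 : x1 * y1 <= 4 * (M * M) /\ - (x1 * y1) <= 4 * (M * M)) by (split; nra).
    assert (P2 : x2 * y2 <= 4 * (M * M) /\ - (x2 * y2) <= 4 * (M * M)) by (split; nra).
    destruct Hsg as [_ [E|E]]; rewrite E; nra.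
Qed.

Lemma exp_m2 : exp (-2) < / 4.
Proof.
  assert (H1 : 2 < exp 1) by (pose proof (exp_ineq1 1); lra).
  assert (E : exp 2 = exp 1 * exp 1) by (rewrite <- exp_plus; f_equal; ring).
  replace (-2) with (- (2)) by ring. rewrite exp_Ropp. apply Rinv_lt_contravar. pose proof (exp_pos 2); nra. nra.
Qed.

Lemma key_est N b i pI rI (nu mu : nat -> R) (A0 A1 A2 v1 v2 K : R) (inS : nat -> bool) :
  (i < N)%nat -> (pI < N)%nat -> (rI < N)%nat ->
  (forall j, (j < N)%nat -> nu j = mu j + IZR (fst (b j)) * A0 + IZR (snd (b j)) * A1
                                  + (1 - IZR (fst (b j)) - IZR (snd (b j))) * A2) ->
  (forall j, inS j = true -> mu j = 0) -> inS i = true ->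
  (forall j, (j < N)%nat -> inS j = true -> j = i \/ j = pI \/ j = rI) ->
  dotv v1 v2 b pI i = -2 -> dotv v1 v2 b rI i = -2 ->
  (forall j, (j < N)%nat -> dotv v1 v2 b j i <= K) ->
  (forall j, (j < N)%nat -> inS j = false -> exp (- mu j) <= exp (- K) / (4 * INR N)) ->
  exists w, Rsum N (fun j => if Nat.eqb j i then 0 else exp (- nu j) * exp (rho b w j))
            < exp (- nu i) * exp (rho b w i).
Proof.
  intros Hi Hp Hr Hnu Hmu Hii Hcase Dp Dr DK Hout.
  exists (v1 + A0 - A2, v2 + A1 - A2).
  set (C := exp (- nu i) * exp (rho b (v1 + A0 - A2, v2 + A1 - A2) i)).
  assert (HC : 0 < C) by (apply Rmult_lt_0_compat; apply exp_pos).
  assert (Hterm : forall j, (j < N)%nat -> exp (- nu j) * exp (rho b (v1 + A0 - A2, v2 + A1 - A2) j)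
                    = C * exp (- mu j + dotv v1 v2 b j i)).
  { intros j Hj. unfold C. rewrite <- !exp_plus. f_equal.
    rewrite (Hnu j Hj), (Hnu i Hi), (Hmu i Hii). unfold rho, dotv. simpl. ring. }
  assert (HN : (0 < N)%nat) by lia.
  assert (HNR : 0 < INR N) by (apply lt_0_INR; auto).
  assert (Hb : forall j, (j < N)%nat -> (if Nat.eqb j i then 0 else exp (- mu j + dotv v1 v2 b j i))
            <= exp (-2) * dl j pI + exp (-2) * dl j rI + / (4 * INR N)).
  { intros j Hj. assert (0 <= dl j pI) by (unfold dl; destruct (Nat.eqb j pI); lra).
    assert (0 <= dl j rI) by (unfold dl; destruct (Nat.eqb j rI); lra).
    assert (0 < / (4 * INR N)) by (apply Rinv_0_lt_compat; lra).
    pose proof (exp_pos (-2)).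
    destruct (Nat.eqb j i) eqn:Eji. nra. apply Nat.eqb_neq in Eji.
    destruct (inS j) eqn:Ej.
    - rewrite (Hmu j Ej). destruct (Hcase j Hj Ej) as [E|[E|E]]. congruence.
      + subst j. rewrite Dp. unfold dl at 1. rewrite Nat.eqb_refl. replace (-0 + -2) with (-2) by ring. nra.
      + subst j. rewrite Dr. unfold dl at 2. rewrite Nat.eqb_refl. replace (-0 + -2) with (-2) by ring. nra.
    - rewrite exp_plus. pose proof (Hout j Hj Ej). pose proof (DK j Hj).
      assert (exp (dotv v1 v2 b j i) <= exp K) by (destruct (Rle_lt_or_eq_dec _ _ H4) as [L|L]; [left; apply exp_increasing; auto| rewrite L; lra]).
      assert (exp (- mu j) * exp (dotv v1 v2 b j i) <= exp (- K) / (4 * INR N) * exp K).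
      { apply Rmult_le_compat; try (left; apply exp_pos); auto. }
      replace (exp (- K) / (4 * INR N) * exp K) with (/ (4 * INR N)) in H6.
      nra. rewrite exp_Ropp. field. split. pose proof (exp_pos K); lra. lra. }
  rewrite (Rsum_ext _ _ (fun j => C * (if Nat.eqb j i then 0 else exp (- mu j + dotv v1 v2 b j i)))).
  rewrite Rsum_scal. rewrite <- (Rmult_1_r C) at 2. apply Rmult_lt_compat_l; auto.
  eapply Rle_lt_trans. apply Rsum_le. apply Hb.
  rewrite !Rsum_plus, Rsum_const.
  rewrite !Rsum_scal.
  assert (E1 : Rsum N (fun j => dl j pI) = 1) by (rewrite <- (Rsum_dl N (fun _ => 1) pI Hp); apply Rsum_ext; intros; ring).
  assert (E2 : Rsum N (fun j => dl j rI) = 1) by (rewrite <- (Rsum_dl N (fun _ => 1) rI Hr); apply Rsum_ext; intros; ring).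
  rewrite E1, E2. replace (INR N * / (4 * INR N)) with (/ 4) by (field; lra).
  pose proof exp_m2. lra.
  intros j Hj. destruct (Nat.eqb j i). ring. apply Hterm; auto.
Qed.

Lemma fold_Cmult_acc (l : list C) (a : C) :
  fold_right Cmult a l = Cmult a (fold_right Cmult (RtoC 1) l).
Proof. induction l; simpl. rewrite Cmult_1_r; auto. rewrite IHl. ring. Qed.

Lemma Cprod_S n f : Cprod (S n) f = Cmult (Cprod n f) (f n).
Proof.
  unfold Cprod. rewrite seq_S, map_app, fold_right_app. simpl.
  rewrite fold_Cmult_acc. rewrite Cmult_1_r. ring.
Qed.

Lemma Cmod_Cprod n (q : nat -> C) (e : nat -> nat) :
  (forall k, (k < n)%nat -> q k <> RtoC 0) ->
  Cmod (Cprod n (fun k => Cpow (q k) (e k))) = exp (- Rsum n (fun k => - ln (Cmod (q k)) * INR (e k))).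
Proof.
  induction n; intros H.
  - unfold Cprod, Rsum; simpl. rewrite Ropp_0, exp_0. apply Cmod_1.
  - rewrite Cprod_S, Cmod_mult, IHn, Rsum_S, Cmod_Cpow by (intros; apply H; lia).
    assert (Hp : 0 < Cmod (q n)) by (apply Cmod_gt_0, H; lia).
    rewrite <- (exp_ln (Cmod (q n) ^ e n)) by (apply pow_lt; auto).
    rewrite ln_pow by auto. rewrite <- exp_plus. f_equal. ring.
Qed.

Lemma in_trib_sigma1 j : in_trib sigma1 j = (j <? 3)%nat.
Proof.
  unfold in_trib, sigma1; simpl.
  destruct j as [|[|[|j]]]; reflexivity.
Qed.

Lemma Cmod_coef p s q j : (forall k, (k < p)%nat -> q k <> RtoC 0) ->
  Cmod (coef_a p s q j) = exp (- Rsum p (fun k => - ln (Cmod (q k)) * sR s sigma1 k j)).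
Proof.
  intros H. unfold coef_a, sR. rewrite in_trib_sigma1.
  destruct (j <? 3)%nat.
  - rewrite (Rsum_ext _ _ (fun _ => 0)), Rsum_const, Rmult_0_r, Ropp_0, exp_0. apply Cmod_1.
    intros; ring.
  - apply Cmod_Cprod; auto.
Qed.

Theorem theorem3p3 (p : nat) (b : nat -> Z * Z) (T : list tri)
    (h : nat -> nat -> Q) (s : tri -> nat -> nat -> nat) :
  mirror_setup p b T h s ->
  exists eps : R, (0 < eps)%R /\
    forall q : nat -> C,
      (forall k, (k < p)%nat -> q k <> RtoC 0 /\ (Cmod (q k) < eps)%R) ->
      forall i, (i < p + 3)%nat ->
        exists w : R * R,
          ~ amoeba (p + 3) b (coef_a p s q) w /\
          amoeba_order (p + 3) b (coef_a p s q) w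
            = (RtoC (IZR (fst (b i))), RtoC (IZR (snd (b i)))).
Proof.
  intros (B0 & B1 & B2 & _ & (T1 & T2 & _ & _ & _ & T6) & Hs1 & HT).
  set (N := (p + 3)%nat).
  set (K := 16 * (Mb N b * Mb N b)).
  assert (HK : 0 <= K) by (unfold K; nra).
  assert (HNR : 0 < INR N) by (apply lt_0_INR; unfold N; lia).
  assert (HN1 : 1 <= INR N) by (replace 1 with (INR 1) by reflexivity; apply le_INR; unfold N; lia).
  set (eps := exp (- K) / (4 * INR N)).
  assert (Heps : 0 < eps) by (unfold eps; apply Rdiv_lt_0_compat; [apply exp_pos|lra]).
  assert (Heps1 : eps <= 1).
  { unfold eps. assert (exp (- K) <= 1) by (rewrite <- exp_0; apply exp_le_mono; lra).
    apply Rmult_le_reg_r with (4 * INR N). lra. unfold Rdiv. rewrite Rmult_assoc, Rinv_l by lra. lra. }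
  exists eps. split; auto.
  intros q Hq i Hi. fold N in Hi |- *.
  assert (Hq0 : forall k, (k < p)%nat -> q k <> RtoC 0) by (intros; apply Hq; auto).
  set (t := fun k => - ln (Cmod (q k))).
  assert (Ht : forall k, (k < p)%nat -> 0 <= t k).
  { intros k Hk. unfold t. destruct (Hq k Hk) as [Hn Hl]. assert (0 < Cmod (q k)) by (apply Cmod_gt_0; auto).
    assert (ln (Cmod (q k)) < 0). { rewrite <- ln_1. apply ln_increasing; lra. } lra. }
  destruct (T6 i Hi) as [sg [Hsg Hisg]].
  destruct (HT sg Hsg) as [Esg Ndsg]. destruct (HT sigma1 Hs1) as [Es1 _].
  assert (Harea := T2 sg Hsg).
  destruct (tri_choice b sg i Harea Hisg) as (pI & rI & HpI & HrI & Hdet & Hcase).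
  assert (HpN : (pI < N)%nat) by (apply (T1 sg Hsg); auto).
  assert (HrN : (rI < N)%nat) by (apply (T1 sg Hsg); auto).
  destruct (vchoice N b i pI rI Hi HpN HrN Hdet) as (v1 & v2 & Dp & Dr & DK).
  fold K in DK.
  set (nu := fun j => Rsum p (fun k => t k * sR s sigma1 k j)).
  set (mu := fun j => Rsum p (fun k => t k * sR s sg k j)).
  assert (Hmu : forall j, in_trib sg j = true -> mu j = 0).
  { intros j Hj. unfold mu, sR. rewrite Hj. rewrite (Rsum_ext _ _ (fun _ => 0)), Rsum_const. ring. intros; ring. }
  assert (Hii : in_trib sg i = true) by (apply in_trib_iff; auto).
  assert (Hnu : forall j, (j < N)%nat -> nu j = mu j + IZR (fst (b j)) * (nu 0%nat - mu 0%nat)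
             + IZR (snd (b j)) * (nu 1%nat - mu 1%nat) + (1 - IZR (fst (b j)) - IZR (snd (b j))) * (nu 2%nat - mu 2%nat)).
  { intros j Hj. unfold nu, mu.
    assert (E : Rsum p (fun k => t k * sR s sigma1 k j) =
                Rsum p (fun k => t k * sR s sg k j) +
                IZR (fst (b j)) * Rsum p (fun k => t k * (sR s sigma1 k 0%nat - sR s sg k 0%nat)) +
                IZR (snd (b j)) * Rsum p (fun k => t k * (sR s sigma1 k 1%nat - sR s sg k 1%nat)) +
                (1 - IZR (fst (b j)) - IZR (snd (b j))) * Rsum p (fun k => t k * (sR s sigma1 k 2%nat - sR s sg k 2%nat))).
    { rewrite <- !Rsum_scal, <- !Rsum_plus. apply Rsum_ext. intros k Hk.
      pose proof (affine_k N p b h s sigma1 sg k B0 B1 B2 ltac:(unfold N; lia) Es1 Esg Hk j Hj) as A.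
      cbv beta in A. assert (A2 : sR s sigma1 k j = sR s sg k j + (IZR (fst (b j)) * (sR s sigma1 k 0%nat - sR s sg k 0%nat) + IZR (snd (b j)) * (sR s sigma1 k 1%nat - sR s sg k 1%nat) + (1 - IZR (fst (b j)) - IZR (snd (b j))) * (sR s sigma1 k 2%nat - sR s sg k 2%nat))) by lra. rewrite A2. ring. }
    rewrite E. rewrite (Rsum_ext _ (fun k => t k * (sR s sigma1 k 0%nat - sR s sg k 0%nat))
       (fun k => t k * sR s sigma1 k 0%nat + - (t k * sR s sg k 0%nat))) by (intros; ring).
    rewrite (Rsum_ext _ (fun k => t k * (sR s sigma1 k 1%nat - sR s sg k 1%nat))
       (fun k => t k * sR s sigma1 k 1%nat + - (t k * sR s sg k 1%nat))) by (intros; ring).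
    rewrite (Rsum_ext _ (fun k => t k * (sR s sigma1 k 2%nat - sR s sg k 2%nat))
       (fun k => t k * sR s sigma1 k 2%nat + - (t k * sR s sg k 2%nat))) by (intros; ring).
    rewrite !Rsum_plus, !Rsum_opp. ring. }
  assert (Hcase' : forall j, (j < N)%nat -> in_trib sg j = true -> j = i \/ j = pI \/ j = rI).
  { intros j _ Hj. apply Hcase. apply in_trib_iff; auto. }
  assert (Hnd : NoDup (tri_idx sg)).
  { destruct sg as [[x y] z]. destruct (area_distinct b x y z Harea) as (?&?&?).
    simpl. constructor. simpl; intuition. constructor. simpl; intuition. constructor. simpl; intuition. constructor. }
  assert (Hout : forall j, (j < N)%nat -> in_trib sg j = false -> exp (- mu j) <= exp (- K) / (4 * INR N)).
  { intros j Hj Hn.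
    destruct (col_nonzero N p s sg j eq_refl Ndsg (T1 sg Hsg) Hnd Hj Hn) as [k0 [Hk0 Hs0]].
    assert (Hge : t k0 <= mu j).
    { unfold mu. eapply Rle_trans; [|apply (Rsum_single_le p (fun k => t k * sR s sg k j) k0)]; auto.
      unfold sR. rewrite Hn. assert (1 <= INR (s sg k0 j)) by (replace 1 with (INR 1) by reflexivity; apply le_INR; auto).
      pose proof (Ht k0 Hk0). nra.
      intros k Hk. apply Rmult_le_pos; [apply Ht; auto|]. unfold sR. rewrite Hn. apply pos_INR. }
    eapply Rle_trans. apply exp_le_mono. apply Ropp_le_contravar, Hge.
    unfold t. rewrite Ropp_involutive, exp_ln. fold eps. left; apply Hq; auto.
    apply Cmod_gt_0; auto. }
  destruct (key_est N b i pI rI nu mu _ _ _ v1 v2 K (in_trib sg) Hi HpN HrN Hnu Hmu Hii Hcase' Dp Dr DK Hout)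
    as [w Hw].
  exists w. apply analytic; auto.
  unfold dominant. rewrite (Cmod_coef p s q i Hq0).
  rewrite (Rsum_ext _ _ (fun j => if Nat.eqb j i then 0 else exp (- nu j) * exp (rho b w j))). auto.
  intros j _. destruct (Nat.eqb j i); auto. rewrite (Cmod_coef p s q j Hq0). reflexivity.
Qed.
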